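(* Consider the system \[ \begin{aligned} \dot S_h(t)&=\beta_h-C_{vh}\frac{I_v(t)}{N_v(t)}S_h(t)-\mu_hS_h(t),\\ \dot I_h(t)&=C_{vh}\frac{I_v(t-\tau)}{N_v(t-\tau)}S_h(t-\tau)-\mu_hI_h(t),\\ \dot S_v(t)&=\beta_v-C_{hv}I_h(t)S_v(t)-\mu_vS_v(t),\\ \dot I_v(t)&=C_{hv}I_h(t)S_v(t)-\mu_vI_v(t), \end{aligned} \] with $N_v=S_v+I_v$ and positive parameters $\beta_h,\beta_v,\mu_h,\mu_v,C_{vh},C_{hv}$. Let $R_0=\sqrt{C_{vh}C_{hv}\beta_h/(\mu_h^2\mu_v)}$. If $R_0>1$, then for any $\tau\ge0$ the unique endemic equilibrium $E^*$ (the unique equilibrium with all components positive) is globally asymptotically stable in $D$.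
   Context: $C_+=\{\varphi\in C([-\tau,0],\mathbb{R}_+^4):\varphi_3(\theta)+\varphi_4(\theta)>0\ \forall\theta\in[-\tau,0]\}$ with the sup-norm, and $D=\{\varphi\in C_+:\varphi_2(0)>0\}$. Globally asymptotically stable in $D$ means $E^*$ is locally (Lyapunov) stable and every solution with initial function in $D$ converges to $E^*$. *)

(* Defs.v *)
From Stdlib Require Import Reals.
From Coquelicot Require Import Coquelicot.
Open Scope R_scope.

Definition f_Sh (bh Cvh muh : R) (Sh Sv Iv : R) : R :=
  bh - Cvh * (Iv / (Sv + Iv)) * Sh - muh * Sh.
Definition f_Ih (Cvh muh : R) (Sh_d Sv_d Iv_d Ih : R) : R :=
  Cvh * (Iv_d / (Sv_d + Iv_d)) * Sh_d - muh * Ih.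
Definition f_Sv (bv Chv muv : R) (Ih Sv : R) : R :=
  bv - Chv * Ih * Sv - muv * Sv.
Definition f_Iv (Chv muv : R) (Ih Sv Iv : R) : R :=
  Chv * Ih * Sv - muv * Iv.

Definition cont_on (a b : R) (f : R -> R) : Prop :=
  forall t, a <= t <= b ->
    filterlim f (within (fun s => a <= s <= b) (locally t)) (locally (f t)).

Definition init_in_D (tau : R) (Sh Ih Sv Iv : R -> R) : Prop :=
  cont_on (- tau) 0 Sh /\ cont_on (- tau) 0 Ih /\
  cont_on (- tau) 0 Sv /\ cont_on (- tau) 0 Iv /\
  (forall t, - tau <= t <= 0 ->
     0 <= Sh t /\ 0 <= Ih t /\ 0 <= Sv t /\ 0 <= Iv t /\ 0 < Sv t + Iv t) /\
  0 < Ih 0.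

(* A solution on [-tau, +oo): continuous from the right at 0 and satisfying
   the delay system for every t > 0 (values on [-tau,0] are the initial data). *)
Definition is_solution (bh bv muh muv Cvh Chv tau : R)
    (Sh Ih Sv Iv : R -> R) : Prop :=
  filterlim Sh (at_right 0) (locally (Sh 0)) /\
  filterlim Ih (at_right 0) (locally (Ih 0)) /\
  filterlim Sv (at_right 0) (locally (Sv 0)) /\
  filterlim Iv (at_right 0) (locally (Iv 0)) /\
  forall t, 0 < t ->
    is_derive Sh t (f_Sh bh Cvh muh (Sh t) (Sv t) (Iv t)) /\
    is_derive Ih t (f_Ih Cvh muh (Sh (t - tau)) (Sv (t - tau)) (Iv (t - tau)) (Ih t)) /\
    is_derive Sv t (f_Sv bv Chv muv (Ih t) (Sv t)) /\
    is_derive Iv t (f_Iv Chv muv (Ih t) (Sv t) (Iv t)).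

Definition is_equilibrium (bh bv muh muv Cvh Chv : R) (Sh Ih Sv Iv : R) : Prop :=
  f_Sh bh Cvh muh Sh Sv Iv = 0 /\ f_Ih Cvh muh Sh Sv Iv Ih = 0 /\
  f_Sv bv Chv muv Ih Sv = 0 /\ f_Iv Chv muv Ih Sv Iv = 0.

Definition repro_number (bh muh muv Cvh Chv : R) : R :=
  sqrt (Cvh * Chv * bh / (muh ^ 2 * muv)).

(* Main.v *)
Require Import Defs.
From Stdlib Require Import Reals Lra Lia ZArith ClassicalEpsilon.
From Coquelicot Require Import Coquelicot.
Open Scope R_scope.

Lemma ball_R (x e y : R) : ball x e y <-> Rabs (y - x) < e.
Proof. reflexivity. Qed.

Lemma locally_R (x : R) (P : R -> Prop) :
  locally x P <-> exists d, 0 < d /\ forall y, Rabs (y - x) < d -> P y.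
Proof.
  split.
  - intros [d Hd]. exists d. split; [apply cond_pos|]. intros y Hy; apply Hd; exact Hy.
  - intros [d [Hd H]]. exists (mkposreal d Hd). intros y Hy; apply H; exact Hy.
Qed.

Definition cpt (f : R -> R) (x : R) : Prop :=
  forall eps, 0 < eps -> exists d, 0 < d /\ forall y, Rabs (y - x) < d -> Rabs (f y - f x) < eps.

Lemma cpt_filterlim f x : filterlim f (locally x) (locally (f x)) -> cpt f x.
Proof.
  intros H eps He. apply filterlim_locally with (eps := mkposreal eps He) in H.
  apply locally_R in H. destruct H as [d [Hd H]]. exists d; split; auto.
Qed.

Lemma cpt_continuity_pt f x : cpt f x -> continuity_pt f x.
Proof.
  intros H. apply continuity_pt_locally. intros eps.
  destruct (H eps (cond_pos eps)) as [d [Hd Hd']].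
  apply locally_R. exists d; split; auto.
Qed.

Lemma cpt_continuous f x : cpt f x -> continuous f x.
Proof. intros H. apply continuity_pt_filterlim. apply cpt_continuity_pt; auto. Qed.

Lemma continuous_cpt f x : continuous f x -> cpt f x.
Proof. intros H. apply cpt_filterlim. exact H. Qed.

Lemma continuity_pt_cpt f x : continuity_pt f x -> cpt f x.
Proof.
  intros H eps He. apply continuity_pt_locally with (eps := mkposreal eps He) in H.
  apply locally_R in H. exact H.
Qed.

Lemma derive_cpt f x l : is_derive f x l -> cpt f x.
Proof.
  intros H. apply continuity_pt_cpt. apply is_derive_Reals in H.
  apply derivable_continuous_pt. exists l; exact H.
Qed.

Lemma within_cpt (D : R -> Prop) f t :
  filterlim f (within D (locally t)) (locally (f t)) ->
  forall eps, 0 < eps -> exists d, 0 < d /\ forall y, D y -> Rabs (y - t) < d -> Rabs (f y - f t) < eps.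
Proof.
  intros H eps He. apply filterlim_locally with (eps := mkposreal eps He) in H.
  unfold within in H. apply locally_R in H. destruct H as [d [Hd H]]. exists d; split; auto.
  intros y Dy Hy. apply (H y Hy Dy).
Qed.

Lemma at_right_cpt f a l :
  filterlim f (at_right a) (locally l) ->
  forall eps, 0 < eps -> exists d, 0 < d /\ forall y, a < y -> y < a + d -> Rabs (f y - l) < eps.
Proof.
  intros H eps He. apply filterlim_locally with (eps := mkposreal eps He) in H.
  unfold at_right, within in H. apply locally_R in H. destruct H as [d [Hd H]]. exists d; split; auto.
  intros y H1 H2. apply (H y). rewrite Rabs_right; lra. exact H1.
Qed.

Lemma ext_cpt (f : R -> R) (a : R) :
  (forall eps, 0 < eps -> exists d, 0 < d /\ forall y, a < y -> y < a + d -> Rabs (f y - f a) < eps) ->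
  (forall s, a < s -> cpt f s) ->
  forall s, cpt (fun x => f (Rmax x a)) s.
Proof.
  intros Hr Hc s eps He.
  destruct (Rlt_le_dec a s) as [Has|Has].
  - destruct (Hc s Has eps He) as [d [Hd H]].
    exists (Rmin d (s - a)). split. apply Rmin_pos; lra.
    intros y Hy. assert (Hm: Rabs (y - s) < d /\ Rabs (y - s) < s - a).
    { split; eapply Rlt_le_trans; eauto; [apply Rmin_l|apply Rmin_r]. }
    destruct Hm as [Hm1 Hm2].
    rewrite (Rmax_left s a) by lra.
    rewrite Rmax_left. apply H; auto.
    apply Rabs_def2 in Hm2. lra.
  - destruct (Hr eps He) as [d [Hd H]]. exists d. split; auto.
    intros y Hy. rewrite (Rmax_right s a) by lra.
    destruct (Rle_lt_dec y a).
    + rewrite Rmax_right by lra. rewrite Rminus_diag, Rabs_R0; auto.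
    + rewrite Rmax_left by lra. apply H; auto.
      apply Rabs_def2 in Hy. lra.
Qed.

Lemma mvt (f d : R -> R) (p q : R) : p < q ->
  (forall x, p <= x <= q -> continuity_pt f x) ->
  (forall x, p < x < q -> is_derive f x (d x)) ->
  exists c, p < c < q /\ f q - f p = d c * (q - p).
Proof.
  intros Hpq Hc Hd.
  assert (pr1 : forall c, p < c < q -> derivable_pt f c).
  { intros c Hc'. exists (d c). apply is_derive_Reals. apply Hd; auto. }
  assert (pr2 : forall c, p < c < q -> derivable_pt id c).
  { intros c _. apply derivable_pt_id. }
  destruct (MVT f id p q pr1 pr2 Hpq Hc (fun c _ => derivable_continuous_pt _ _ (derivable_pt_id c)))
    as [c [P HP]].
  exists c. split; auto.
  rewrite (derive_pt_eq_0 f c (d c) (pr1 c P)) in HP.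
  2: { apply is_derive_Reals; apply Hd; auto. }
  rewrite (derive_pt_eq_0 id c 1 (pr2 c P)) in HP.
  2: { apply derivable_pt_lim_id. }
  unfold id in HP. lra.
Qed.

Lemma mono_ge (f d : R -> R) (p q : R) : p <= q ->
  (forall x, p <= x <= q -> continuity_pt f x) ->
  (forall x, p < x < q -> is_derive f x (d x)) ->
  (forall x, p < x < q -> 0 <= d x) -> f p <= f q.
Proof.
  intros Hpq Hc Hd Hpos. destruct (Req_dec p q) as [->|Hne]; [lra|].
  destruct (mvt f d p q) as [c [Hc1 Hc2]]; auto. lra.
  specialize (Hpos c Hc1). nra.
Qed.

Lemma mono_gt (f d : R -> R) (p q : R) : p < q ->
  (forall x, p <= x <= q -> continuity_pt f x) ->
  (forall x, p < x < q -> is_derive f x (d x)) ->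
  (forall x, p < x < q -> 0 < d x) -> f p < f q.
Proof.
  intros Hpq Hc Hd Hpos.
  destruct (mvt f d p q) as [c [Hc1 Hc2]]; auto.
  specialize (Hpos c Hc1). nra.
Qed.

Lemma mono_le (f d : R -> R) (p q : R) : p <= q ->
  (forall x, p <= x <= q -> continuity_pt f x) ->
  (forall x, p < x < q -> is_derive f x (d x)) ->
  (forall x, p < x < q -> d x <= 0) -> f q <= f p.
Proof.
  intros Hpq Hc Hd Hpos. destruct (Req_dec p q) as [->|Hne]; [lra|].
  destruct (mvt f d p q) as [c [Hc1 Hc2]]; auto. lra.
  specialize (Hpos c Hc1). nra.
Qed.

Lemma real_ind (P : R -> Prop) :
  (forall s, 0 <= s -> (forall r, 0 <= r < s -> P r) ->
     exists eta, 0 < eta /\ forall r, s <= r < s + eta -> P r) ->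
  forall r, 0 <= r -> P r.
Proof.
  intros H r0 Hr0. destruct (Classical_Prop.classic (P r0)) as [|HnP]; auto. exfalso.
  set (E := fun s => 0 <= s <= r0 /\ forall r, 0 <= r < s -> P r).
  assert (Hb : bound E). { exists r0. intros s [Hs _]. lra. }
  assert (He : exists x, E x). { exists 0. split. lra. intros r Hr; lra. }
  destruct (completeness E Hb He) as [l [Hl1 Hl2]].
  assert (H0l : 0 <= l). { apply Hl1. split. lra. intros r Hr; lra. }
  assert (Hlr : l <= r0). { apply Hl2. intros s [Hs _]. lra. }
  assert (Hbelow : forall r, 0 <= r < l -> P r).
  { intros r Hr. destruct (Classical_Prop.classic (P r)) as [|Hn]; auto. exfalso.
    assert (l <= r). { apply Hl2. intros s [Hs Hs']. destruct (Rle_lt_dec s r); auto.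
      exfalso. apply Hn. apply Hs'. lra. }
    lra. }
  destruct (H l H0l Hbelow) as [eta [Heta Hn]].
  destruct (Rlt_le_dec r0 (l + eta)) as [Hlt|Hge].
  - apply HnP. apply Hn. lra.
  - assert (E (l + eta / 2)).
    { split. lra. intros r Hr. destruct (Rlt_le_dec r l). apply Hbelow; lra. apply Hn; lra. }
    assert (l + eta/2 <= l) by (apply Hl1; auto). lra.
Qed.

Lemma Rabs_max_le (y s a : R) : a <= s -> Rabs (Rmax y a - s) <= Rabs (y - s).
Proof.
  intros H. unfold Rmax. destruct (Rle_dec y a).
  - rewrite !Rabs_left1 by lra. lra.
  - lra.
Qed.

Lemma ext2_cpt (f : R -> R) (a b : R) : a <= b ->
  (forall t, a <= t <= b -> forall eps, 0 < eps -> exists d, 0 < d /\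
      forall y, a <= y <= b -> Rabs (y - t) < d -> Rabs (f y - f t) < eps) ->
  (forall eps, 0 < eps -> exists d, 0 < d /\ forall y, b < y -> y < b + d -> Rabs (f y - f b) < eps) ->
  (forall s, b < s -> cpt f s) ->
  forall s, cpt (fun x => f (Rmax x a)) s.
Proof.
  intros Hab Hw Hr Hc s eps He.
  destruct (Rlt_le_dec b s) as [Hbs|Hsb].
  - destruct (Hc s Hbs eps He) as [d [Hd H]].
    exists (Rmin d (s - b)). split. apply Rmin_pos; lra.
    intros y Hy. assert (Hm: Rabs (y - s) < d /\ Rabs (y - s) < s - b).
    { split; eapply Rlt_le_trans; eauto; [apply Rmin_l|apply Rmin_r]. }
    destruct Hm as [Hm1 Hm2]. apply Rabs_def2 in Hm2.
    rewrite (Rmax_left s a) by lra. rewrite Rmax_left by lra. apply H; auto.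
  - destruct (Rlt_le_dec s a) as [Hsa|Has].
    + exists (a - s). split. lra. intros y Hy. apply Rabs_def2 in Hy.
      rewrite (Rmax_right s a) by lra. rewrite Rmax_right by lra.
      rewrite Rminus_diag, Rabs_R0; auto.
    + rewrite (Rmax_left s a) by lra.
      destruct (Hw s (conj Has Hsb) eps He) as [d1 [Hd1 H1]].
      destruct (Req_dec s b) as [Heq|Hne].
      * subst s. destruct (Hr eps He) as [d2 [Hd2 H2]].
        exists (Rmin d1 d2). split. apply Rmin_pos; lra.
        intros y Hy. assert (Hm: Rabs (y - b) < d1 /\ Rabs (y - b) < d2).
        { split; eapply Rlt_le_trans; eauto; [apply Rmin_l|apply Rmin_r]. }
        destruct Hm as [Hm1 Hm2].
        destruct (Rle_lt_dec y b).
        -- apply H1. split. apply Rmax_r. unfold Rmax; destruct (Rle_dec y a); lra.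
           eapply Rle_lt_trans. apply Rabs_max_le; lra. auto.
        -- rewrite Rmax_left by lra. apply H2; auto. apply Rabs_def2 in Hm2; lra.
      * exists (Rmin d1 (b - s)). split. apply Rmin_pos; lra.
        intros y Hy. assert (Hm: Rabs (y - s) < d1 /\ Rabs (y - s) < b - s).
        { split; eapply Rlt_le_trans; eauto; [apply Rmin_l|apply Rmin_r]. }
        destruct Hm as [Hm1 Hm2]. pose proof Hm2 as Hm3. apply Rabs_def2 in Hm3.
        apply H1. split. apply Rmax_r. unfold Rmax; destruct (Rle_dec y a); lra.
        eapply Rle_lt_trans. apply Rabs_max_le; lra. auto.
Qed.

Lemma ex_RInt_cont (g : R -> R) a b : (forall x, continuity_pt g x) -> ex_RInt g a b.
Proof.
  intros Hg. apply (ex_RInt_continuous (V:=R_CompleteNormedModule)). intros z _. apply continuity_pt_filterlim. apply Hg.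
Qed.

Lemma rint_derive (g : R -> R) c t : (forall x, continuity_pt g x) ->
  is_derive (fun b => RInt g c b) t (g t).
Proof.
  intros Hg. apply (is_derive_RInt g (fun b => RInt g c b) c t).
  - apply filter_forall. intros b. apply (RInt_correct g c b). apply ex_RInt_cont; auto.
  - apply continuity_pt_filterlim. apply Hg.
Qed.

Lemma rint_split (g : R -> R) tau t : (forall x, continuity_pt g x) ->
  RInt g (t - tau) t = RInt g 0 t - RInt g 0 (t - tau).
Proof.
  intros Hg. rewrite <- (RInt_Chasles g 0 (t - tau) t) by (apply ex_RInt_cont; auto).
  unfold plus; simpl.
  generalize (RInt g 0 (t - tau) : R) (RInt g (t - tau) t : R). intros A B. simpl. ring.
Qed.

Lemma rint_delay_derive (g : R -> R) tau t : (forall x, continuity_pt g x) ->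
  is_derive (fun s => RInt g (s - tau) s) t (g t - g (t - tau)).
Proof.
  intros Hg.
  apply is_derive_ext with (f := fun s => RInt g 0 s - RInt g 0 (s - tau)).
  { intros s. symmetry. apply rint_split; auto. }
  apply (is_derive_minus (fun s => RInt g 0 s) (fun s => RInt g 0 (s - tau))).
  - apply rint_derive; auto.
  - replace (g (t - tau)) with (scal 1 (g (t - tau))) by (unfold scal; simpl; unfold mult; simpl; ring).
    apply (is_derive_comp (fun s => RInt g 0 s) (fun s => s - tau)).
    + apply rint_derive; auto.
    + auto_derive; auto. 
Qed.

Lemma rint_cont (g : R -> R) tau t : (forall x, continuity_pt g x) ->
  continuity_pt (fun s => RInt g (s - tau) s) t.
Proof.
  intros Hg. apply derivable_continuous_pt. exists (g t - g (t - tau)).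
  apply is_derive_Reals. apply rint_delay_derive; auto.
Qed.

Lemma cp_plus f g x : continuity_pt f x -> continuity_pt g x -> continuity_pt (fun y => f y + g y) x.
Proof. intros; exact (continuity_pt_plus f g x H H0). Qed.
Lemma cp_minus f g x : continuity_pt f x -> continuity_pt g x -> continuity_pt (fun y => f y - g y) x.
Proof. intros; exact (continuity_pt_minus f g x H H0). Qed.
Lemma cp_mult f g x : continuity_pt f x -> continuity_pt g x -> continuity_pt (fun y => f y * g y) x.
Proof. intros; exact (continuity_pt_mult f g x H H0). Qed.
Lemma cp_div f g x : continuity_pt f x -> continuity_pt g x -> g x <> 0 -> continuity_pt (fun y => f y / g y) x.
Proof. intros; exact (continuity_pt_div f g x H H0 H1). Qed.
Lemma cp_const c x : continuity_pt (fun _ => c) x.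
Proof. apply continuity_pt_const. intros a b; reflexivity. Qed.
Lemma cp_id x : continuity_pt (fun y => y) x.
Proof. apply derivable_continuous_pt. apply derivable_pt_id. Qed.
Lemma cp_comp f g x : continuity_pt f x -> continuity_pt g (f x) -> continuity_pt (fun y => g (f y)) x.
Proof. intros; exact (continuity_pt_comp f g x H H0). Qed.
Lemma cp_ln x : 0 < x -> continuity_pt ln x.
Proof. intros H. apply derivable_continuous_pt. exists (/ x). apply derivable_pt_lim_ln; auto. Qed.
Lemma cp_exp x : continuity_pt exp x.
Proof. apply derivable_continuous_pt. apply derivable_pt_exp. Qed.
Lemma cp_ext f g x : (forall y, f y = g y) -> continuity_pt f x -> continuity_pt g x.
Proof. intros Hfg H. apply continuity_pt_locally_ext with (a := 1) (f := f); auto. lra. Qed.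

Definition G (z : R) : R := z - 1 - ln z.

Lemma ln_le_m1 z : 0 < z -> ln z <= z - 1.
Proof.
  intros Hz. destruct (Req_dec z 1) as [->|Hne]. rewrite ln_1; lra.
  assert (H : 1 + (z - 1) < exp (z - 1)) by (apply exp_ineq1; lra).
  rewrite <- (ln_exp (z - 1)). apply ln_le; lra.
Qed.

Lemma G_nonneg z : 0 < z -> 0 <= G z.
Proof. intros Hz. unfold G. pose proof (ln_le_m1 z Hz). lra. Qed.

Lemma G_le_sq z : 0 < z -> G z <= (z - 1) ^ 2 / z.
Proof.
  intros Hz. unfold G. pose proof (ln_le_m1 (/ z) (Rinv_0_lt_compat _ Hz)).
  rewrite ln_Rinv in H by auto.
  replace ((z - 1) ^ 2 / z) with (z - 2 + / z) by (field; lra). lra.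
Qed.

Lemma G_lower z M : 0 < z -> G z <= M -> exp (- (1 + M)) <= z.
Proof.
  intros Hz HG. unfold G in HG. rewrite <- (exp_ln z) by auto.
  destruct (Rle_lt_dec (- (1 + M)) (ln z)) as [Hl|Hl].
  - destruct Hl as [Hl|Hl]. left; apply exp_increasing; auto. right; rewrite Hl; auto.
  - exfalso. lra.
Qed.

Lemma G_upper z M : 0 < z -> G z <= M -> z <= 2 * (M + 1).
Proof.
  intros Hz HG. unfold G in HG.
  assert (Hs : 0 < sqrt z) by (apply sqrt_lt_R0; auto).
  assert (Hzz : sqrt z * sqrt z = z) by (apply sqrt_sqrt; lra).
  assert (Hl : ln z = 2 * ln (sqrt z)).
  { rewrite <- Hzz at 1. rewrite ln_mult by auto. ring. }
  pose proof (ln_le_m1 (sqrt z) Hs).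
  assert (0 <= (sqrt z - 2) ^ 2) by (apply pow2_ge_0).
  nra.
Qed.

Lemma G_quad z q : 0 < z -> z <= q -> 1 <= q -> (z - 1) ^ 2 / (2 * q ^ 2) <= G z.
Proof.
  intros Hz Hzq Hq.
  set (H := fun s => G s - (s - 1) ^ 2 / (2 * q ^ 2)).
  set (dH := fun s => (s - 1) * (q ^ 2 - s) / (s * q ^ 2)).
  assert (Hq2 : 0 < q ^ 2) by (apply pow_lt; lra).
  assert (Hd : forall s, 0 < s -> is_derive H s (dH s)).
  { intros s Hs. unfold H, dH, G. auto_derive. auto. field. split; lra. }
  assert (Hc : forall s, 0 < s -> continuity_pt H s).
  { intros s Hs. apply derivable_continuous_pt. exists (dH s). apply is_derive_Reals. auto. }
  assert (H1 : H 1 = 0). { unfold H, G. rewrite ln_1. field. lra. }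
  enough (0 <= H z) by (unfold H in *; lra).
  destruct (Rle_lt_dec z 1) as [Hz1|Hz1].
  - rewrite <- H1. apply (mono_le H dH z 1); auto.
    + intros s Hs; apply Hc; lra.
    + intros s Hs; apply Hd; lra.
    + intros s Hs. unfold dH. apply Rmult_le_0_r.
      * apply Rmult_le_0_r. lra. nra.
      * left. apply Rinv_0_lt_compat. nra.
  - rewrite <- H1. apply (mono_ge H dH 1 z); try lra.
    + intros s Hs; apply Hc; lra.
    + intros s Hs; apply Hd; lra.
    + intros s Hs. unfold dH. apply Rmult_le_pos.
      * apply Rmult_le_pos. lra. nra.
      * left. apply Rinv_0_lt_compat. nra.
Qed.

Lemma Derive_is (f : R -> R) (x d : R) : is_derive f x d -> Derive (fun y : R => f y) x = d.
Proof. intros H. apply is_derive_unique. exact H. Qed.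

Lemma dplus (f g : R -> R) x df dg : is_derive f x df -> is_derive g x dg ->
  is_derive (fun y => f y + g y) x (df + dg).
Proof. intros H1 H2. exact (is_derive_plus f g x df dg H1 H2). Qed.

Lemma dscal (f : R -> R) c x df : is_derive f x df -> is_derive (fun y => c * f y) x (c * df).
Proof. intros H. auto_derive. exists df; auto. rewrite (Derive_is f _ _ H). ring. Qed.

Lemma dG (f : R -> R) c t df : 0 < c -> 0 < f t -> is_derive f t df ->
  is_derive (fun s => c * G (f s / c)) t ((1 - c / f t) * df).
Proof.
  intros Hc Hf H. unfold G. auto_derive.
  - repeat split; try (exists df; auto). apply Rdiv_lt_0_compat; auto.
  - rewrite (Derive_is f _ _ H). field. split; lra.
Qed.

Lemma ident (bh muh Cvh Chv muv xs ys us X Y U Xd Ud M : R) :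
  0 < muh -> 0 < muv -> 0 < xs -> 0 < ys -> 0 < us -> us < 1 ->
  0 < X -> 0 < Y -> 0 < U -> 0 < Xd -> 0 < Ud ->
  bh = Cvh * us * xs + muh * xs -> Cvh * us * xs = muh * ys -> Chv * ys * (1 - us) = muv * us ->
  let beta := muh * ys in let k := muh * ys / (muv * us) in
  (1 - xs / X) * (bh - Cvh * U * X - muh * X) + (1 - ys / Y) * (Cvh * Ud * Xd - muh * Y)
  + k * ((1 - us / U) * (Chv * Y * (1 - U) - M * U))
  + beta * (G (X * U / (xs * us)) - G (Xd * Ud / (xs * us)))
  = - muh * (X - xs) ^ 2 / X
    - beta * (G (xs / X) + G ((Xd * Ud / (xs * us)) / (Y / ys)) + G ((Y / ys) / (U / us)))
    - k * Chv * Y * (U - us) ^ 2 / U - k * (M - muv) * (U - us).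
Proof.
  intros. unfold G.
  assert (E1 : ln (X * U / (xs * us)) = ln X + ln U - ln xs - ln us).
  { rewrite ln_div by nra. rewrite !ln_mult by nra. ring. }
  assert (E2 : ln (Xd * Ud / (xs * us)) = ln Xd + ln Ud - ln xs - ln us).
  { rewrite ln_div by nra. rewrite !ln_mult by nra. ring. }
  assert (E3 : ln (xs / X) = ln xs - ln X) by (rewrite ln_div; auto).
  assert (E4 : ln ((Xd * Ud / (xs * us)) / (Y / ys)) = ln Xd + ln Ud - ln xs - ln us - ln Y + ln ys).
  { assert (0 < Xd * Ud / (xs * us)) by (apply Rdiv_lt_0_compat; nra).
    assert (0 < Y / ys) by (apply Rdiv_lt_0_compat; nra).
    rewrite ln_div by auto. rewrite E2. rewrite ln_div by auto. ring. }
  assert (E5 : ln ((Y / ys) / (U / us)) = ln Y - ln ys - ln U + ln us).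
  { assert (0 < U / us) by (apply Rdiv_lt_0_compat; nra).
    assert (0 < Y / ys) by (apply Rdiv_lt_0_compat; nra).
    rewrite ln_div by auto. rewrite !ln_div by auto. ring. }
  rewrite E1, E2, E3, E4, E5. subst beta k.
  assert (Hchv : Chv = muv * us / (ys * (1 - us))).
  { field_simplify_eq. nra. split; lra. }
  assert (Hcvh : Cvh = muh * ys / (us * xs)).
  { field_simplify_eq. nra. split; lra. }
  rewrite H10. rewrite Hcvh, Hchv. field. repeat split; lra.
Qed.

Lemma dexp (a b t : R) : is_derive (fun s => a * exp (- b * s)) t (- a * b * exp (- b * t)).
Proof. auto_derive; auto. ring. Qed.

Lemma dlin (c t : R) : is_derive (fun s => c * s) t c.
Proof. auto_derive; auto. ring. Qed.

Lemma cp_G f s : continuity_pt f s -> 0 < f s -> continuity_pt (fun r => G (f r)) s.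
Proof.
  intros Hf Hp. unfold G. apply cp_minus. apply cp_minus. auto. apply cp_const.
  apply cp_comp; auto. apply cp_ln; auto.
Qed.

Definition Vf (xs ys us beta k tau : R) (x y u : R -> R) (t : R) :=
  xs * G (x t / xs) + ys * G (y t / ys) + k * (us * G (u t / us))
  + beta * RInt (fun s => G (x s * u s / (xs * us))) (t - tau) t.

Definition Phif (xs ys us beta k tau D muv : R) (x y u : R -> R) (t : R) :=
  Vf xs ys us beta k tau x y u t + k * D / muv * exp (- muv * t).

Lemma core (bh muh Cvh Chv muv xs ys us tau T D : R) (x y u m : R -> R) :
  0 < muh -> 0 < muv -> 0 < xs -> 0 < ys -> 0 < us -> us < 1 -> 0 <= tau -> 0 <= D ->
  bh = Cvh * us * xs + muh * xs -> Cvh * us * xs = muh * ys -> Chv * ys * (1 - us) = muv * us ->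
  (forall s, continuity_pt x s /\ continuity_pt y s /\ continuity_pt u s) ->
  (forall s, 0 < x s /\ 0 < y s /\ 0 < u s /\ u s < 1) ->
  (forall t, T < t ->
     is_derive x t (bh - Cvh * u t * x t - muh * x t) /\
     is_derive y t (Cvh * u (t - tau) * x (t - tau) - muh * y t) /\
     is_derive u t (Chv * y t * (1 - u t) - m t * u t) /\
     Rabs (m t - muv) <= D * exp (- muv * t)) ->
  forall p q c, T <= p <= q ->
    (forall s, p <= s <= q ->
       c <= muh * (x s - xs) ^ 2 / x s
            + muh * ys / (muv * us) * Chv * y s * (u s - us) ^ 2 / u s
            + muh * ys * G ((y s / ys) / (u s / us))) ->
    Phif xs ys us (muh * ys) (muh * ys / (muv * us)) tau D muv x y u q
    <= Phif xs ys us (muh * ys) (muh * ys / (muv * us)) tau D muv x y u p - c * (q - p).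
Proof.
  intros Hmuh Hmuv Hxs Hys Hus Hus1 Htau HD He1 He2 He3 Hc Hp Hd p q c Hpq HW.
  set (beta := muh * ys). set (k := muh * ys / (muv * us)).
  assert (Hk : 0 < k) by (unfold k; apply Rdiv_lt_0_compat; nra).
  set (g := fun s => G (x s * u s / (xs * us))).
  assert (Hg : forall s, continuity_pt g s).
  { intros s. unfold g. apply cp_G.
    - apply cp_div. apply cp_mult; apply Hc. apply cp_const. nra.
    - destruct (Hp s) as [? [? [? ?]]]. apply Rdiv_lt_0_compat; nra. }
  set (F := fun s => Phif xs ys us beta k tau D muv x y u s + c * s).
  assert (HF : forall t, p < t < q -> exists d, is_derive F t d /\ d <= 0).
  { intros t Htpq. assert (Ht : T < t) by lra. destruct (Hd t Ht) as [Hx [Hy [Hu Hm]]].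
    destruct (Hp t) as [Px [Py [Pu Pu1]]].
    destruct (Hp (t - tau)) as [Pxd [Pyd [Pud Pud1]]].
    eexists. split.
    - unfold F, Phif, Vf. apply dplus. apply dplus. apply dplus. apply dplus. apply dplus.
      + apply dG; eauto.
      + apply dG; eauto.
      + apply dscal. apply dG; eauto.
      + apply dscal. apply rint_delay_derive. exact Hg.
      + apply dexp.
      + apply dlin.
    - simpl. unfold g.
      pose proof (ident bh muh Cvh Chv muv xs ys us (x t) (y t) (u t) (x (t - tau)) (u (t - tau)) (m t)
                    Hmuh Hmuv Hxs Hys Hus Hus1 Px Py Pu Pxd Pud He1 He2 He3) as HI.
      simpl in HI. fold k in HI. fold beta in HI.
      specialize (HW t ltac:(lra)). fold k in HW. fold beta in HW.
      rewrite HI.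
      assert (HG1 : 0 <= G (xs / x t)) by (apply G_nonneg; apply Rdiv_lt_0_compat; lra).
      assert (HG2 : 0 <= G (x (t - tau) * u (t - tau) / (xs * us) / (y t / ys))).
      { apply G_nonneg. apply Rdiv_lt_0_compat. apply Rdiv_lt_0_compat; nra. apply Rdiv_lt_0_compat; nra. }
      assert (Hb : 0 < beta) by (unfold beta; nra).
      assert (Hab : - ((m t - muv) * (u t - us)) <= D * exp (- muv * t)).
      { eapply Rle_trans. apply Rle_abs. rewrite Rabs_Ropp, Rabs_mult.
        assert (Rabs (u t - us) <= 1) by (apply Rabs_le; lra).
        pose proof (Rabs_pos (m t - muv)). pose proof (Rabs_pos (u t - us)). nra. }
      assert (Hkab : k * (- ((m t - muv) * (u t - us))) <= k * (D * exp (- muv * t))).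
      { apply Rmult_le_compat_l; lra. }
      assert (Hexp : k * D / muv * muv = k * D) by (field; lra).
      assert (E : - (k * D / muv) * muv * exp (- muv * t) = - (k * D * exp (- muv * t))).
      { field. lra. }
      rewrite E.
      assert (Hbg : 0 <= beta * G (xs / x t) + beta * G (x (t - tau) * u (t - tau) / (xs * us) / (y t / ys))).
      { apply Rplus_le_le_0_compat; apply Rmult_le_pos; lra. }
      nra. }
  assert (HFc : forall s, continuity_pt F s).
  { intros s. unfold F, Phif, Vf.
    destruct (Hp s) as [Px [Py [Pu Pu1]]].
    repeat apply cp_plus.
    - apply cp_mult. apply cp_const. apply cp_G. apply cp_div. apply Hc. apply cp_const. lra.
      apply Rdiv_lt_0_compat; lra.
    - apply cp_mult. apply cp_const. apply cp_G. apply cp_div. apply Hc. apply cp_const. lra.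
      apply Rdiv_lt_0_compat; lra.
    - apply cp_mult. apply cp_const. apply cp_mult. apply cp_const. apply cp_G. apply cp_div. apply Hc. apply cp_const. lra.
      apply Rdiv_lt_0_compat; lra.
    - apply cp_mult. apply cp_const. apply rint_cont. exact Hg.
    - apply cp_mult. apply cp_const. apply cp_comp. apply cp_mult. apply cp_const. apply cp_id. apply cp_exp.
    - apply cp_mult. apply cp_const. apply cp_id. }
  destruct (Classical_Prop.classic (p = q)) as [<-|Hne].
  - replace (c * (p - p)) with 0 by ring. lra.
  - assert (Hmono : F q <= F p).
    { apply (mono_le F (Derive F) p q). lra. intros; apply HFc.
      - intros t Ht. destruct (HF t Ht) as [d [Hd1 Hd2]]. rewrite (is_derive_unique F t d Hd1). exact Hd1.
      - intros t Ht. destruct (HF t Ht) as [d [Hd1 Hd2]]. rewrite (is_derive_unique F t d Hd1). exact Hd2. }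
    unfold F in Hmono. unfold k, beta in *. replace (c * (q - p)) with (c * q - c * p) by ring. lra.
Qed.

Lemma Phi_lower (xs ys us beta k tau D muv : R) (x y u : R -> R) t :
  0 < xs -> 0 < ys -> 0 < us -> 0 <= beta -> 0 <= k -> 0 <= D -> 0 < muv -> 0 <= tau ->
  (forall s, continuity_pt x s /\ continuity_pt y s /\ continuity_pt u s) ->
  (forall s, 0 < x s /\ 0 < y s /\ 0 < u s /\ u s < 1) ->
  xs * G (x t / xs) + ys * G (y t / ys) + k * (us * G (u t / us))
  <= Phif xs ys us beta k tau D muv x y u t.
Proof.
  intros Hxs Hys Hus Hb Hk HD Hmuv Htau Hc Hp.
  unfold Phif, Vf.
  assert (HI : 0 <= RInt (fun s => G (x s * u s / (xs * us))) (t - tau) t).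
  { apply RInt_ge_0. lra.
    apply ex_RInt_cont. intros s. apply cp_G.
    - apply cp_div. apply cp_mult; apply Hc. apply cp_const. nra.
    - destruct (Hp s) as [? [? [? ?]]]. apply Rdiv_lt_0_compat; nra.
    - intros s _. apply G_nonneg. destruct (Hp s) as [? [? [? ?]]]. apply Rdiv_lt_0_compat; nra. }
  assert (0 <= k * D / muv * exp (- muv * t)).
  { apply Rmult_le_pos. apply Rdiv_le_0_compat; nra. left; apply exp_pos. }
  assert (0 <= beta * RInt (fun s => G (x s * u s / (xs * us))) (t - tau) t) by nra.
  lra.
Qed.

Lemma barbalat (Phi h : R -> R) (T L : R) : 0 < L ->
  (forall t, T <= t -> 0 <= Phi t) ->
  (forall t, T <= t -> 0 <= h t) ->
  (forall p q c, T <= p <= q -> (forall s, p <= s <= q -> c <= h s) -> Phi q <= Phi p - c * (q - p)) ->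
  (forall s t, T <= s -> T <= t -> Rabs (h s - h t) <= L * Rabs (s - t)) ->
  forall eps, 0 < eps -> exists M, forall t, M <= t -> h t < eps.
Proof.
  intros HL HP0 Hh0 HPhi Hlip eps He.
  apply Classical_Prop.NNPP. intros Hn.
  assert (Hn' : forall M, exists t, M <= t /\ eps <= h t).
  { intros M. apply Classical_Prop.NNPP. intros Hm. apply Hn. exists M. intros t Ht.
    apply Rnot_le_lt. intros Hle. apply Hm. exists t. auto. }
  set (d := eps / (2 * L)).
  assert (Hd : 0 < d) by (unfold d; apply Rdiv_lt_0_compat; lra).
  set (c := eps / 2).
  assert (Hstep : forall n : nat, exists t, T <= t /\ Phi t <= Phi T - INR n * (c * d)).
  { induction n as [|n IH].
    - exists T. simpl. split; lra.
    - destruct IH as [t [Ht HPt]].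
      destruct (Hn' t) as [t' [Ht' Hht']].
      assert (H1 : Phi t' <= Phi t).
      { pose proof (HPhi t t' 0 ltac:(lra) ltac:(intros s Hs; apply Hh0; lra)). lra. }
      assert (H2 : Phi (t' + d) <= Phi t' - c * (t' + d - t')).
      { apply HPhi. lra. intros s Hs.
        pose proof (Hlip s t' ltac:(lra) ltac:(lra)).
        rewrite (Rabs_right (s - t')) in H by lra.
        apply Rabs_def2 in H || idtac.
        assert (L * (s - t') <= L * d) by (apply Rmult_le_compat_l; lra).
        assert (L * d = eps / 2) by (unfold d; field; lra).
        unfold c. pose proof (Rle_abs (h t' - h s)). rewrite Rabs_minus_sym in H. lra. }
      exists (t' + d). split. lra. rewrite S_INR.
      replace (t' + d - t') with d in H2 by ring. nra. }
  assert (Hcd : 0 < c * d) by (unfold c; nra).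
  destruct (archimed (Phi T / (c * d))) as [Ha _].
  destruct (Hstep (Z.to_nat (up (Phi T / (c * d))))) as [t [Ht HPt]].
  pose proof (HP0 t Ht).
  assert (Hup : (0 <= up (Phi T / (c * d)))%Z).
  { apply le_IZR. assert (0 <= Phi T / (c * d)) by (apply Rdiv_le_0_compat; [apply HP0; lra| lra]). lra. }
  rewrite INR_IZR_INZ, Z2Nat.id in HPt by auto.
  assert (Phi T / (c * d) * (c * d) = Phi T) by (unfold Rdiv; rewrite Rmult_assoc, Rinv_l, Rmult_1_r; lra).
  assert (Phi T / (c * d) * (c * d) < IZR (up (Phi T / (c * d))) * (c * d)) by (apply Rmult_lt_compat_r; lra).
  lra.
Qed.

Lemma lipschitz (h dh : R -> R) (T0 T L : R) : T0 < T ->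
  (forall t, T0 < t -> is_derive h t (dh t) /\ Rabs (dh t) <= L) ->
  forall s t, T <= s -> T <= t -> Rabs (h s - h t) <= L * Rabs (s - t).
Proof.
  intros HT Hd.
  assert (Hgen : forall s t, T <= s -> s < t -> Rabs (h s - h t) <= L * Rabs (s - t)).
  { intros s t Hs Hst.
    destruct (mvt h dh s t Hst) as [c [Hc1 Hc2]].
    - intros x Hx. apply derivable_continuous_pt. exists (dh x). apply is_derive_Reals. apply Hd. lra.
    - intros x Hx. apply Hd. lra.
    - rewrite Rabs_minus_sym, Hc2, Rabs_mult, (Rabs_minus_sym s t).
      apply Rmult_le_compat_r. apply Rabs_pos. apply Hd. lra. }
  intros s t Hs Ht. destruct (Rtotal_order s t) as [H|[H|H]].
  - auto.
  - subst. rewrite !Rminus_diag, Rabs_R0. pose proof (Hd (t) ltac:(lra)) as [_ HH].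
    pose proof (Rabs_pos (dh t)). nra.
  - rewrite Rabs_minus_sym, (Rabs_minus_sym s t). auto.
Qed.

Definition us_ (bh muh muv Cvh Chv : R) :=
  (Chv * Cvh * bh - muv * muh ^ 2) / (Chv * Cvh * bh + muv * muh * Cvh).
Definition xs_ (bh muh muv Cvh Chv : R) := bh / (Cvh * us_ bh muh muv Cvh Chv + muh).
Definition ys_ (bh muh muv Cvh Chv : R) := Cvh * us_ bh muh muv Cvh Chv * xs_ bh muh muv Cvh Chv / muh.

Lemma R0_gt (bh muh muv Cvh Chv : R) : 0 < bh -> 0 < muh -> 0 < muv -> 0 < Cvh -> 0 < Chv ->
  repro_number bh muh muv Cvh Chv > 1 -> muv * muh ^ 2 < Chv * Cvh * bh.
Proof.
  intros. unfold repro_number in H4.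
  destruct (Rlt_le_dec 1 (Cvh * Chv * bh / (muh ^ 2 * muv))) as [Hl|Hl].
  - assert (0 < muh ^ 2 * muv) by (apply Rmult_lt_0_compat; [apply pow_lt|]; lra).
    apply Rmult_lt_compat_r with (r := muh ^ 2 * muv) in Hl; auto.
    unfold Rdiv in Hl. rewrite Rmult_assoc, Rinv_l, Rmult_1_r in Hl by lra. nra.
  - exfalso. assert (sqrt (Cvh * Chv * bh / (muh ^ 2 * muv)) <= sqrt 1) by (apply sqrt_le_1_alt; auto).
    rewrite sqrt_1 in H5. lra.
Qed.

Lemma eq_props (bh bv muh muv Cvh Chv : R) : 0 < bh -> 0 < bv -> 0 < muh -> 0 < muv -> 0 < Cvh -> 0 < Chv ->
  muv * muh ^ 2 < Chv * Cvh * bh ->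
  let us := us_ bh muh muv Cvh Chv in let xs := xs_ bh muh muv Cvh Chv in let ys := ys_ bh muh muv Cvh Chv in
  0 < us /\ us < 1 /\ 0 < xs /\ 0 < ys /\
  bh = Cvh * us * xs + muh * xs /\ Cvh * us * xs = muh * ys /\ Chv * ys * (1 - us) = muv * us.
Proof.
  intros Hbh Hbv Hmuh Hmuv HCvh HChv HR us xs ys.
  assert (Hp1 : 0 < Chv * Cvh * bh) by (repeat apply Rmult_lt_0_compat; lra).
  assert (Hp2 : 0 < muv * muh * Cvh) by (repeat apply Rmult_lt_0_compat; lra).
  assert (Hden : 0 < Chv * Cvh * bh + muv * muh * Cvh) by lra.
  assert (Hus : 0 < us) by (unfold us, us_; apply Rdiv_lt_0_compat; lra).
  assert (Hus1 : us < 1).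
  { unfold us, us_. apply (Rmult_lt_reg_r (Chv * Cvh * bh + muv * muh * Cvh)); auto.
    unfold Rdiv. rewrite Rmult_assoc, Rinv_l, Rmult_1_r by lra. rewrite Rmult_1_l.
    assert (0 < muv * muh ^ 2) by (apply Rmult_lt_0_compat; [|apply pow_lt]; lra).
    assert (0 < muv * muh * Cvh) by (repeat apply Rmult_lt_0_compat; lra). lra. }
  assert (Hxs : 0 < xs).
  { unfold xs, xs_. change (us_ bh muh muv Cvh Chv) with us. apply Rdiv_lt_0_compat. lra.
    pose proof (Rmult_lt_0_compat _ _ HCvh Hus). lra. }
  assert (Hys : 0 < ys).
  { unfold ys, ys_. change (xs_ bh muh muv Cvh Chv) with xs. change (us_ bh muh muv Cvh Chv) with us.
    apply Rdiv_lt_0_compat; [|lra]. apply Rmult_lt_0_compat; [apply Rmult_lt_0_compat|]; assumption. }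
  repeat split; auto.
  - unfold xs, xs_. change (us_ bh muh muv Cvh Chv) with us. field.
    pose proof (Rmult_lt_0_compat _ _ HCvh Hus). lra.
  - unfold ys, ys_. change (xs_ bh muh muv Cvh Chv) with xs. change (us_ bh muh muv Cvh Chv) with us. field. lra.
  - assert (key : Chv * Cvh * bh * (1 - us) = muv * muh * (Cvh * us + muh)).
    { unfold us, us_. field. lra. }
    assert (0 < Cvh * us + muh) by nra.
    unfold ys, ys_, xs, xs_. change (us_ bh muh muv Cvh Chv) with us.
    transitivity (us * (Chv * Cvh * bh * (1 - us)) / (muh * (Cvh * us + muh))).
    + field. split; lra.
    + rewrite key. field. split; lra.
Qed.

Lemma eq_unique (bh bv muh muv Cvh Chv a b c d : R) : 0 < bh -> 0 < bv -> 0 < muh -> 0 < muv -> 0 < Cvh -> 0 < Chv ->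
  0 < a -> 0 < b -> 0 < c -> 0 < d ->
  is_equilibrium bh bv muh muv Cvh Chv a b c d ->
  a = xs_ bh muh muv Cvh Chv /\ b = ys_ bh muh muv Cvh Chv /\
  c = (1 - us_ bh muh muv Cvh Chv) * (bv / muv) /\ d = us_ bh muh muv Cvh Chv * (bv / muv).
Proof.
  intros Hbh Hbv Hmuh Hmuv HCvh HChv Ha Hb Hc Hd [E1 [E2 [E3 E4]]].
  unfold f_Sh, f_Ih, f_Sv, f_Iv in *.
  set (p := d / (c + d)) in *.
  assert (HN : c + d = bv / muv) by (field_simplify_eq; [nra | lra]).
  assert (Hp : 0 < p) by (unfold p; apply Rdiv_lt_0_compat; lra).
  assert (Hc' : c = (1 - p) * (bv / muv)) by (rewrite <- HN; unfold p; field; lra).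
  assert (Hd' : d = p * (bv / muv)) by (rewrite <- HN; unfold p; field; lra).
  assert (Hcp : 0 < Cvh * p + muh) by (pose proof (Rmult_lt_0_compat _ _ HCvh Hp); lra).
  assert (Ha' : a = bh / (Cvh * p + muh)) by (field_simplify_eq; lra).
  assert (Hb' : b = Cvh * p * a / muh) by (field_simplify_eq; lra).
  assert (Hrel : Chv * b * (1 - p) = muv * p).
  { assert (Chv * b * c = muv * d) by lra. rewrite Hc', Hd' in H.
    assert (0 < bv / muv) by (apply Rdiv_lt_0_compat; lra).
    apply (Rmult_eq_reg_r (bv / muv)). lra. lra. }
  assert (key : Chv * Cvh * bh * (1 - p) = muv * muh * (Cvh * p + muh)).
  { rewrite Hb', Ha' in Hrel.
    apply (Rmult_eq_reg_l p). 2: lra.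
    transitivity (muh * (Cvh * p + muh) * (Chv * (Cvh * p * (bh / (Cvh * p + muh)) / muh) * (1 - p))).
    field. split; lra. rewrite Hrel. field. }
  assert (Hpu : p = us_ bh muh muv Cvh Chv).
  { unfold us_.
    assert (Hp1 : 0 < Chv * Cvh * bh) by (repeat apply Rmult_lt_0_compat; lra).
    assert (Hp2 : 0 < muv * muh * Cvh) by (repeat apply Rmult_lt_0_compat; lra).
    field_simplify_eq; [|lra]. lra. }
  assert (Hx : a = xs_ bh muh muv Cvh Chv) by (unfold xs_; rewrite <- Hpu; exact Ha').
  repeat split.
  - exact Hx.
  - unfold ys_. rewrite <- Hpu, <- Hx. exact Hb'.
  - rewrite <- Hpu. exact Hc'.
  - rewrite <- Hpu. exact Hd'.
Qed.

Lemma eq_is (bh bv muh muv Cvh Chv : R) : 0 < bh -> 0 < bv -> 0 < muh -> 0 < muv -> 0 < Cvh -> 0 < Chv ->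
  muv * muh ^ 2 < Chv * Cvh * bh ->
  is_equilibrium bh bv muh muv Cvh Chv (xs_ bh muh muv Cvh Chv) (ys_ bh muh muv Cvh Chv)
     ((1 - us_ bh muh muv Cvh Chv) * (bv / muv)) (us_ bh muh muv Cvh Chv * (bv / muv)).
Proof.
  intros. destruct (eq_props bh bv muh muv Cvh Chv) as [Hus [Hus1 [Hxs [Hys [E1 [E2 E3]]]]]]; auto.
  set (us := us_ bh muh muv Cvh Chv) in *. set (xs := xs_ bh muh muv Cvh Chv) in *.
  set (ys := ys_ bh muh muv Cvh Chv) in *.
  assert (Hq : us * (bv / muv) / ((1 - us) * (bv / muv) + us * (bv / muv)) = us) by (field; split; lra).
  unfold is_equilibrium, f_Sh, f_Ih, f_Sv, f_Iv. rewrite Hq.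
  repeat split.
  - lra.
  - lra.
  - replace (bv - Chv * ys * ((1 - us) * (bv / muv)) - muv * ((1 - us) * (bv / muv)))
      with (bv - (Chv * ys * (1 - us)) * (bv / muv) - muv * ((1 - us) * (bv / muv))) by ring.
    rewrite E3. field. lra.
  - replace (Chv * ys * ((1 - us) * (bv / muv))) with ((Chv * ys * (1 - us)) * (bv / muv)) by ring.
    rewrite E3. ring.
Qed.

Lemma derive_max (f : R -> R) a t d : a < t -> is_derive f t d ->
  is_derive (fun r => f (Rmax r a)) t d.
Proof.
  intros Ht H. apply (is_derive_ext_loc f). 2: exact H.
  apply locally_R. exists (t - a). split. lra. intros y Hy. apply Rabs_def2 in Hy.
  rewrite Rmax_left by lra. reflexivity.
Qed.

Lemma hat_cont (f : R -> R) a :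
  (forall eps, 0 < eps -> exists d, 0 < d /\ forall y, a < y -> y < a + d -> Rabs (f y - f a) < eps) ->
  (forall t, a < t -> exists d, is_derive f t d) ->
  forall s, continuity_pt (fun r => f (Rmax r a)) s.
Proof.
  intros Hr Hd s. apply cpt_continuity_pt. apply ext_cpt; auto.
  intros t Ht. destruct (Hd t Ht) as [d Hd']. eapply derive_cpt; eauto.
Qed.

Lemma hat_cont0 (f : R -> R) :
  filterlim f (at_right 0) (locally (f 0)) ->
  (forall t, 0 < t -> exists d, is_derive f t d) ->
  forall s, continuity_pt (fun r => f (Rmax r 0)) s.
Proof.
  intros Hr Hd. apply hat_cont; auto.
  intros eps He. destruct (at_right_cpt f 0 (f 0) Hr eps He) as [d [Hd0 H]].
  exists d. split; auto.
Qed.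

Lemma hat_cont_pos (f : R -> R) a : 0 < a ->
  (forall t, 0 < t -> exists d, is_derive f t d) ->
  forall s, continuity_pt (fun r => f (Rmax r a)) s.
Proof.
  intros Ha Hd. apply hat_cont.
  - intros eps He. destruct (Hd a Ha) as [d Hd']. destruct (derive_cpt f a d Hd' eps He) as [δ [Hδ H]].
    exists δ. split; auto. intros y H1 H2. apply H. apply Rabs_def1; lra.
  - intros t Ht. apply Hd. lra.
Qed.

Lemma cont_max_point (g : R -> R) a s : (forall s, continuity_pt g s) -> a <= s ->
  continuity_pt g s.
Proof. intros H _. apply H. Qed.

Lemma is_derive_ex (f : R -> R) t d : is_derive f t d -> exists d, is_derive f t d.
Proof. intros; eauto. Qed.

Lemma is_derive_eq (f : R -> R) x d1 d2 : is_derive f x d1 -> d1 = d2 -> is_derive f x d2.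
Proof. intros H <-; exact H. Qed.

Lemma d_fexp (f : R -> R) c a t df : is_derive f t df ->
  is_derive (fun r => (f r - c) * exp (a * r)) t ((df + a * (f t - c)) * exp (a * t)).
Proof. intros H. auto_derive. exists df; auto. rewrite (Derive_is f t df H). ring. Qed.

Lemma N_formula (bv muv : R) (N : R -> R) : 0 < muv ->
  (forall s, continuity_pt (fun r => N (Rmax r 0)) s) ->
  (forall t, 0 < t -> is_derive N t (bv - muv * N t)) ->
  forall t, 0 <= t -> N t = bv / muv + (N 0 - bv / muv) * exp (- muv * t).
Proof.
  intros Hmuv Hc Hd t Ht.
  set (h := fun r => (N (Rmax r 0) - bv / muv) * exp (muv * r)).
  assert (Hhc : forall s, continuity_pt h s).
  { intros s. unfold h. apply cp_mult. apply cp_minus. apply Hc. apply cp_const.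
    apply cp_comp. apply cp_mult. apply cp_const. apply cp_id. apply cp_exp. }
  assert (Hhd : forall s, 0 < s -> is_derive h s 0).
  { intros s Hs. unfold h.
    pose proof (derive_max N 0 s _ Hs (Hd s Hs)) as HN.
    eapply is_derive_eq. apply (d_fexp (fun r => N (Rmax r 0))). exact HN.
    rewrite Rmax_left by lra. assert (E0 : bv - muv * N s + muv * (N s - bv / muv) = 0) by (field; lra). rewrite E0. apply Rmult_0_l. }
  assert (E1 : h t <= h 0).
  { apply (mono_le h (fun _ => 0) 0 t); auto. intros; apply Hhd; lra. intros; lra. }
  assert (E2 : h 0 <= h t).
  { apply (mono_ge h (fun _ => 0) 0 t); auto. intros; apply Hhd; lra. intros; lra. }
  assert (E : h t = h 0) by lra. unfold h in E.
  rewrite Rmax_left in E by lra. rewrite Rmax_left in E by lra.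
  rewrite Rmult_0_r, exp_0, Rmult_1_r in E.
  assert (Hexp : exp (muv * t) * exp (- muv * t) = 1).
  { rewrite <- exp_plus. replace (muv * t + - muv * t) with 0 by ring. apply exp_0. }
  rewrite <- E. 
  replace ((N t - bv / muv) * exp (muv * t) * exp (- muv * t)) with ((N t - bv / muv) * (exp (muv * t) * exp (- muv * t))) by ring.
  rewrite Hexp. ring.
Qed.

Lemma dmult (f g : R -> R) x df dg : is_derive f x df -> is_derive g x dg ->
  is_derive (fun y => f y * g y) x (df * g x + f x * dg).
Proof.
  intros H1 H2. exact (is_derive_mult f g x df dg H1 H2 (fun n m => Rmult_comm n m)).
Qed.

Lemma dcomp (f g : R -> R) x df dg : is_derive g x dg -> is_derive f (g x) df ->
  is_derive (fun y => f (g y)) x (dg * df).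
Proof. intros H1 H2. exact (is_derive_comp f g x df dg H2 H1). Qed.

Lemma d_expint (c : R -> R) s : (forall x, continuity_pt c x) ->
  is_derive (fun r => exp (RInt c 0 r)) s (c s * exp (RInt c 0 s)).
Proof.
  intros Hc. apply (dcomp exp (fun r => RInt c 0 r)). apply rint_derive; auto. apply is_derive_exp.
Qed.

Lemma RInt_point0 (c : R -> R) : RInt c 0 0 = 0.
Proof. apply (RInt_point 0 c). Qed.

Lemma pos_if (f c : R -> R) b : 0 < b ->
  (forall s, continuity_pt (fun r => f (Rmax r 0)) s) -> (forall s, continuity_pt c s) ->
  (forall t, 0 < t -> is_derive f t (b - c t * f t)) -> 0 <= f 0 ->
  forall t, 0 < t -> 0 < f t.
Proof.
  intros Hb Hfc Hc Hd Hf0 t Ht.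
  set (F := fun r => f (Rmax r 0) * exp (RInt c 0 r)).
  assert (HF : f 0 < F t).
  { replace (f 0) with (F 0).
    2: { unfold F. rewrite Rmax_left by lra. rewrite RInt_point0, exp_0. ring. }
    apply (mono_gt F (fun r => b * exp (RInt c 0 r)) 0 t Ht).
    - intros x _. unfold F. apply cp_mult. apply Hfc.
      apply cp_comp. apply derivable_continuous_pt. exists (c x). apply is_derive_Reals. apply rint_derive; auto.
      apply cp_exp.
    - intros x Hx. unfold F. eapply is_derive_eq.
      apply dmult. apply derive_max. lra. apply Hd. lra. apply d_expint; auto.
      simpl. rewrite Rmax_left by lra. ring.
    - intros x _. apply Rmult_lt_0_compat; auto. apply exp_pos. }
  unfold F in HF. rewrite Rmax_left in HF by lra.
  pose proof (exp_pos (RInt c 0 t)).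
  destruct (Rle_lt_dec (f t) 0); auto. nra.
Qed.

Lemma d_fexp0 (f : R -> R) a t df : is_derive f t df ->
  is_derive (fun r => f r * exp (a * r)) t ((df + a * f t) * exp (a * t)).
Proof. intros H. auto_derive. exists df; auto. rewrite (Derive_is f t df H). ring. Qed.

Lemma cont_fexp (f : R -> R) a s : (forall s, continuity_pt f s) -> continuity_pt (fun r => f r * exp (a * r)) s.
Proof. intros H. apply cp_mult. apply H. apply cp_comp. apply cp_mult. apply cp_const. apply cp_id. apply cp_exp. Qed.

Lemma ratio_nonneg a b : 0 <= a -> 0 <= b -> 0 <= a / (b + a).
Proof.
  intros Ha Hb. destruct (Req_dec (b + a) 0) as [H|H].
  - rewrite H. unfold Rdiv. rewrite Rinv_0. lra.
  - apply Rdiv_le_0_compat; lra.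
Qed.

Lemma pos_IhIv (Cvh Chv muh muv tau : R) (Sh Ih Sv Iv : R -> R) :
  0 < Cvh -> 0 < Chv -> 0 < muh -> 0 < muv -> 0 <= tau ->
  (forall s, continuity_pt (fun r => Ih (Rmax r 0)) s) ->
  (forall s, continuity_pt (fun r => Iv (Rmax r 0)) s) ->
  (forall t, 0 < t -> is_derive Ih t (f_Ih Cvh muh (Sh (t - tau)) (Sv (t - tau)) (Iv (t - tau)) (Ih t))) ->
  (forall t, 0 < t -> is_derive Iv t (f_Iv Chv muv (Ih t) (Sv t) (Iv t))) ->
  (forall t, - tau <= t <= 0 -> 0 <= Sh t /\ 0 <= Sv t /\ 0 <= Iv t) ->
  (forall t, 0 < t -> 0 < Sh t /\ 0 < Sv t) ->
  0 < Ih 0 -> 0 <= Iv 0 ->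
  forall t, 0 <= t -> 0 < Ih t /\ 0 <= Iv t.
Proof.
  intros HCvh HChv Hmuh Hmuv Htau HcI HcV HdI HdV Hinit Hpos HI0 HV0.
  set (F1 := fun r => Ih (Rmax r 0) * exp (muh * r)).
  set (F2 := fun r => Iv (Rmax r 0) * exp (muv * r)).
  assert (HF1c : forall s, continuity_pt F1 s) by (intros; apply cont_fexp; auto).
  assert (HF2c : forall s, continuity_pt F2 s) by (intros; apply cont_fexp; auto).
  set (d1 := fun r => Cvh * (Iv (r - tau) / (Sv (r - tau) + Iv (r - tau))) * Sh (r - tau) * exp (muh * r)).
  set (d2 := fun r => Chv * Ih r * Sv r * exp (muv * r)).
  assert (HF1d : forall r, 0 < r -> is_derive F1 r (d1 r)).
  { intros r Hr. unfold F1, d1. eapply is_derive_eq. apply d_fexp0. apply derive_max. lra. apply HdI; auto.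
    simpl. rewrite Rmax_left by lra. unfold f_Ih. ring. }
  assert (HF2d : forall r, 0 < r -> is_derive F2 r (d2 r)).
  { intros r Hr. unfold F2, d2. eapply is_derive_eq. apply d_fexp0. apply derive_max. lra. apply HdV; auto.
    simpl. rewrite Rmax_left by lra. unfold f_Iv. ring. }
  assert (HF10 : F1 0 = Ih 0) by (unfold F1; rewrite Rmax_left by lra; rewrite Rmult_0_r, exp_0; ring).
  assert (HF20 : F2 0 = Iv 0) by (unfold F2; rewrite Rmax_left by lra; rewrite Rmult_0_r, exp_0; ring).
  assert (HF1v : forall r, 0 <= r -> F1 r = Ih r * exp (muh * r)) by (intros; unfold F1; rewrite Rmax_left; lra).
  assert (HF2v : forall r, 0 <= r -> F2 r = Iv r * exp (muv * r)) by (intros; unfold F2; rewrite Rmax_left; lra).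
  apply real_ind. intros s Hs IH.
  assert (Hat : 0 < Ih s /\ 0 <= Iv s).
  { destruct (Req_dec s 0) as [->|Hs0]; [split; auto|].
    split.
    - assert (Ih 0 <= F1 s).
      { rewrite <- HF10. apply (mono_ge F1 d1 0 s). lra. intros; auto. intros r Hr; apply HF1d; lra.
        intros r Hr. unfold d1.
        apply Rmult_le_pos; [|left; apply exp_pos].
        assert (Hd : 0 <= Sh (r - tau) /\ 0 <= Sv (r - tau) /\ 0 <= Iv (r - tau)).
        { destruct (Rle_lt_dec (r - tau) 0).
          - apply Hinit. lra.
          - destruct (Hpos (r - tau)) as [? ?]; auto. split; [lra|split;[lra|]]. apply IH. lra. }
        destruct Hd as [? [? ?]].
        apply Rmult_le_pos; auto. apply Rmult_le_pos. lra. apply ratio_nonneg; auto. }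
      rewrite HF1v in H by lra. pose proof (exp_pos (muh * s)).
      destruct (Rle_lt_dec (Ih s) 0); auto. nra.
    - assert (Iv 0 <= F2 s).
      { rewrite <- HF20. apply (mono_ge F2 d2 0 s). lra. intros; auto. intros r Hr; apply HF2d; lra.
        intros r Hr. unfold d2. apply Rmult_le_pos; [|left; apply exp_pos].
        destruct (Hpos r) as [? ?]; [lra|]. destruct (IH r) as [? ?]; [lra|].
        apply Rmult_le_pos; [apply Rmult_le_pos|]; lra. }
      rewrite HF2v in H by lra. pose proof (exp_pos (muv * s)).
      destruct (Rle_lt_dec 0 (Iv s)); auto. nra. }
  destruct Hat as [HIs HVs].
  assert (Hcs : cpt (fun r => Ih (Rmax r 0)) s) by (apply continuity_pt_cpt; auto).
  destruct (Hcs (Ih s) HIs) as [eta [Heta Heta']].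
  exists eta. split; auto. intros r Hr.
  assert (HIr : forall r', s <= r' < s + eta -> 0 < Ih r').
  { intros r' Hr'. specialize (Heta' r' ltac:(apply Rabs_def1; lra)).
    rewrite !Rmax_left in Heta' by lra. apply Rabs_def2 in Heta'. lra. }
  split. apply HIr; auto.
  destruct (Req_dec r s) as [->|Hne]; auto.
  assert (F2 s <= F2 r).
  { apply (mono_ge F2 d2 s r). lra. intros; auto. intros r' Hr'; apply HF2d; lra.
    intros r' Hr'. unfold d2. apply Rmult_le_pos; [|left; apply exp_pos].
    destruct (Hpos r') as [? ?]; [lra|]. pose proof (HIr r' ltac:(lra)).
    apply Rmult_le_pos; [apply Rmult_le_pos|]; lra. }
  rewrite HF2v, HF2v in H by lra. pose proof (exp_pos (muv * s)). pose proof (exp_pos (muv * r)).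
  assert (0 <= Iv s * exp (muv * s)) by (apply Rmult_le_pos; lra).
  destruct (Rle_lt_dec 0 (Iv r)); auto. nra.
Qed.

Lemma exp_le1 a t : 0 <= a -> 0 <= t -> exp (- a * t) <= 1.
Proof.
  intros. rewrite <- exp_0. destruct (Req_dec (a * t) 0) as [H1|H1].
  - replace (- a * t) with 0 by lra. lra.
  - left. apply exp_increasing. nra.
Qed.

Lemma N_lower (Ns N0 e : R) : 0 < e <= 1 -> Rmin N0 Ns <= Ns + (N0 - Ns) * e.
Proof.
  intros He. unfold Rmin. destruct (Rle_dec N0 Ns); nra.
Qed.

Lemma N_upper (Ns N0 e : R) : 0 < e <= 1 -> Ns + (N0 - Ns) * e <= Rmax N0 Ns.
Proof.
  intros He. unfold Rmax. destruct (Rle_dec N0 Ns); nra.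
Qed.

Lemma sol_facts (bh bv muh muv Cvh Chv tau : R) (Sh Ih Sv Iv : R -> R) :
  0 < bh -> 0 < bv -> 0 < muh -> 0 < muv -> 0 < Cvh -> 0 < Chv -> 0 <= tau ->
  init_in_D tau Sh Ih Sv Iv ->
  is_solution bh bv muh muv Cvh Chv tau Sh Ih Sv Iv ->
  (forall s, continuity_pt (fun r => Sh (Rmax r 0)) s) /\
  (forall s, continuity_pt (fun r => Ih (Rmax r 0)) s) /\
  (forall s, continuity_pt (fun r => Sv (Rmax r 0)) s) /\
  (forall s, continuity_pt (fun r => Iv (Rmax r 0)) s) /\
  (forall t, 0 <= t -> Sv t + Iv t = bv / muv + (Sv 0 + Iv 0 - bv / muv) * exp (- muv * t)) /\
  (forall t, 0 < t -> 0 < Sh t /\ 0 < Ih t /\ 0 < Sv t /\ 0 < Iv t).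
Proof.
  intros Hbh Hbv Hmuh Hmuv HCvh HChv Htau Hinit Hsol.
  destruct Hinit as [_ [_ [_ [_ [Hip HI0]]]]].
  destruct Hsol as [Hr1 [Hr2 [Hr3 [Hr4 Hd]]]].
  assert (HcSh : forall s, continuity_pt (fun r => Sh (Rmax r 0)) s).
  { apply hat_cont0; auto. intros t Ht. destruct (Hd t Ht) as [H _]. eauto. }
  assert (HcIh : forall s, continuity_pt (fun r => Ih (Rmax r 0)) s).
  { apply hat_cont0; auto. intros t Ht. destruct (Hd t Ht) as [_ [H _]]. eauto. }
  assert (HcSv : forall s, continuity_pt (fun r => Sv (Rmax r 0)) s).
  { apply hat_cont0; auto. intros t Ht. destruct (Hd t Ht) as [_ [_ [H _]]]. eauto. }
  assert (HcIv : forall s, continuity_pt (fun r => Iv (Rmax r 0)) s).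
  { apply hat_cont0; auto. intros t Ht. destruct (Hd t Ht) as [_ [_ [_ H]]]. eauto. }
  destruct (Hip 0 ltac:(lra)) as [HS0 [HI0' [HSv0 [HIv0 HN0]]]].
  assert (HN : forall t, 0 <= t -> Sv t + Iv t = bv / muv + (Sv 0 + Iv 0 - bv / muv) * exp (- muv * t)).
  { apply (N_formula bv muv (fun r => Sv r + Iv r)); auto.
    - intros s. apply cp_plus; auto.
    - intros t Ht. destruct (Hd t Ht) as [_ [_ [H3 H4]]].
      eapply is_derive_eq. apply dplus; eauto. simpl. unfold f_Sv, f_Iv. ring. }
  assert (HNpos : forall t, 0 <= t -> 0 < Sv t + Iv t).
  { intros t Ht. rewrite HN by auto.
    assert (0 < exp (- muv * t) <= 1) by (split; [apply exp_pos| apply exp_le1; lra]).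
    eapply Rlt_le_trans; [|apply N_lower; eauto].
    apply Rmin_pos; auto. apply Rdiv_lt_0_compat; lra. }
  assert (HSh : forall t, 0 < t -> 0 < Sh t).
  { apply (pos_if Sh (fun r => Cvh * (Iv (Rmax r 0) / (Sv (Rmax r 0) + Iv (Rmax r 0))) + muh) bh); auto.
    - intros s. apply cp_plus; [|apply cp_const]. apply cp_mult. apply cp_const. apply cp_div; auto.
      apply cp_plus; auto. apply Rgt_not_eq. apply HNpos. apply Rmax_r.
    - intros t Ht. destruct (Hd t Ht) as [H _]. eapply is_derive_eq. apply H.
      simpl. rewrite Rmax_left by lra. unfold f_Sh. ring. }
  assert (HSv : forall t, 0 < t -> 0 < Sv t).
  { apply (pos_if Sv (fun r => Chv * Ih (Rmax r 0) + muv) bv); auto.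
    - intros s. apply cp_plus; [|apply cp_const]. apply cp_mult. apply cp_const. auto.
    - intros t Ht. destruct (Hd t Ht) as [_ [_ [H _]]]. eapply is_derive_eq. apply H.
      simpl. rewrite Rmax_left by lra. unfold f_Sv. ring. }
  assert (HIhIv : forall t, 0 <= t -> 0 < Ih t /\ 0 <= Iv t).
  { apply (pos_IhIv Cvh Chv muh muv tau Sh Ih Sv Iv); auto.
    - intros t Ht. apply Hd; auto.
    - intros t Ht. apply Hd; auto.
    - intros t Ht. destruct (Hip t Ht) as [? [? [? [? ?]]]]. auto. }
  do 5 (split; auto).
  intros t Ht. split; auto. split. apply HIhIv; lra. split; auto.
  set (F2 := fun r => Iv (Rmax r 0) * exp (muv * r)).
  assert (Iv 0 < F2 t).
  { replace (Iv 0) with (F2 0) by (unfold F2; rewrite Rmax_left by lra; rewrite Rmult_0_r, exp_0; ring).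
    apply (mono_gt F2 (fun r => Chv * Ih r * Sv r * exp (muv * r)) 0 t Ht).
    - intros; apply cont_fexp; auto.
    - intros r Hr. unfold F2. eapply is_derive_eq. apply d_fexp0. apply derive_max. lra. apply Hd; lra.
      simpl. rewrite Rmax_left by lra. unfold f_Iv. ring.
    - intros r Hr. apply Rmult_lt_0_compat; [|apply exp_pos].
      pose proof (HSv r ltac:(lra)). destruct (HIhIv r ltac:(lra)).
      repeat apply Rmult_lt_0_compat; auto. }
  unfold F2 in H. rewrite Rmax_left in H by lra. pose proof (exp_pos (muv * t)).
  destruct (Rle_lt_dec (Iv t) 0); auto. nra.
Qed.

Definition hat (f : R -> R) (a : R) := fun r => f (Rmax r a).
Definition uhat (Sv Iv : R -> R) (a : R) := fun r => Iv (Rmax r a) / (Sv (Rmax r a) + Iv (Rmax r a)).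
Definition Dc (bv muv N0 : R) := bv * Rabs (N0 - bv / muv) / (Rmin N0 (bv / muv) * (bv / muv)).

Lemma d_ratio (S I : R -> R) t dS dI : is_derive S t dS -> is_derive I t dI -> S t + I t <> 0 ->
  is_derive (fun r => I r / (S r + I r)) t ((dI * (S t + I t) - I t * (dS + dI)) / (S t + I t) ^ 2).
Proof.
  intros H1 H2 H3. auto_derive.
  - repeat split; auto. exists dI; auto. exists dS; auto. exists dI; auto.
  - rewrite (Derive_is S t dS H1), (Derive_is I t dI H2). field. auto.
Qed.

Lemma m_bound (bv muv N0 N : R) e : 0 < bv -> 0 < muv -> 0 < N0 -> 0 < e <= 1 ->
  N = bv / muv + (N0 - bv / muv) * e ->
  Rabs (bv / N - muv) <= Dc bv muv N0 * e.
Proof.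
  intros Hbv Hmuv HN0 He HN.
  set (Ns := bv / muv) in *.
  assert (HNs : 0 < Ns) by (unfold Ns; apply Rdiv_lt_0_compat; lra).
  assert (Hmin : 0 < Rmin N0 Ns) by (apply Rmin_pos; lra).
  assert (HNl : Rmin N0 Ns <= N) by (rewrite HN; apply N_lower; auto).
  assert (HmuvNs : muv = bv / Ns) by (unfold Ns; field; lra).
  assert (E : bv / N - muv = - (bv * ((N0 - Ns) * e)) / (N * Ns)).
  { replace ((N0 - Ns) * e) with (N - Ns) by (rewrite HN; ring). rewrite HmuvNs. field. split; lra. }
  rewrite E. unfold Dc. fold Ns.
  rewrite Rabs_div by nra. rewrite Rabs_Ropp, Rabs_mult, Rabs_mult.
  rewrite (Rabs_right bv) by lra. rewrite (Rabs_right e) by lra. rewrite (Rabs_right (N * Ns)) by nra.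
  unfold Rdiv.
  assert (/ (N * Ns) <= / (Rmin N0 Ns * Ns)).
  { apply Rinv_le_contravar. nra. apply Rmult_le_compat_r; lra. }
  pose proof (Rabs_pos (N0 - Ns)).
  assert (0 <= bv * Rabs (N0 - Ns)) by nra.
  replace (bv * (Rabs (N0 - Ns) * e) * / (N * Ns)) with ((bv * Rabs (N0 - Ns) * e) * / (N * Ns)) by ring.
  replace (bv * Rabs (N0 - Ns) * / (Rmin N0 Ns * Ns) * e) with ((bv * Rabs (N0 - Ns) * e) * / (Rmin N0 Ns * Ns)) by ring.
  apply Rmult_le_compat_l; nra.
Qed.

Lemma core_hyps (bh bv muh muv Cvh Chv tau a : R) (Sh Ih Sv Iv : R -> R) :
  0 < bh -> 0 < bv -> 0 < muh -> 0 < muv -> 0 < Cvh -> 0 < Chv -> 0 <= tau -> 0 <= a + tau ->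
  (forall s, continuity_pt (hat Sh a) s /\ continuity_pt (hat Ih a) s /\
             continuity_pt (hat Sv a) s /\ continuity_pt (hat Iv a) s) ->
  (forall s, a <= s -> 0 < Sh s /\ 0 < Ih s /\ 0 < Sv s /\ 0 < Iv s) ->
  is_solution bh bv muh muv Cvh Chv tau Sh Ih Sv Iv ->
  0 < Sv 0 + Iv 0 ->
  (forall t, 0 <= t -> Sv t + Iv t = bv / muv + (Sv 0 + Iv 0 - bv / muv) * exp (- muv * t)) ->
  (forall s, continuity_pt (hat Sh a) s /\ continuity_pt (hat Ih a) s /\ continuity_pt (uhat Sv Iv a) s) /\
  (forall s, 0 < hat Sh a s /\ 0 < hat Ih a s /\ 0 < uhat Sv Iv a s /\ uhat Sv Iv a s < 1) /\
  (forall t, a + tau < t ->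
     is_derive (hat Sh a) t (bh - Cvh * uhat Sv Iv a t * hat Sh a t - muh * hat Sh a t) /\
     is_derive (hat Ih a) t (Cvh * uhat Sv Iv a (t - tau) * hat Sh a (t - tau) - muh * hat Ih a t) /\
     is_derive (uhat Sv Iv a) t (Chv * hat Ih a t * (1 - uhat Sv Iv a t) - (fun r => bv / (Sv r + Iv r)) t * uhat Sv Iv a t) /\
     Rabs ((fun r => bv / (Sv r + Iv r)) t - muv) <= Dc bv muv (Sv 0 + Iv 0) * exp (- muv * t)).
Proof.
  intros Hbh Hbv Hmuh Hmuv HCvh HChv Htau Hat Hc Hp Hsol HN0 HN.
  destruct Hsol as [_ [_ [_ [_ Hd]]]].
  assert (Hpa : forall s, 0 < Sh (Rmax s a) /\ 0 < Ih (Rmax s a) /\ 0 < Sv (Rmax s a) /\ 0 < Iv (Rmax s a)).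
  { intros s. apply Hp. apply Rmax_r. }
  split; [|split].
  - intros s. destruct (Hc s) as [? [? [? ?]]]. repeat split; auto.
    unfold uhat. apply cp_div; auto. apply cp_plus; auto.
    destruct (Hpa s) as [? [? [? ?]]]. apply Rgt_not_eq. lra.
  - intros s. destruct (Hpa s) as [? [? [? ?]]]. unfold hat, uhat. repeat split; auto.
    apply Rdiv_lt_0_compat; lra.
    apply (Rmult_lt_reg_r (Sv (Rmax s a) + Iv (Rmax s a))). lra.
    unfold Rdiv. rewrite Rmult_assoc, Rinv_l, Rmult_1_r, Rmult_1_l by lra. lra.
  - intros t Ht.
    assert (Ht0 : 0 < t) by lra. assert (Hta : a < t) by lra.
    destruct (Hd t Ht0) as [D1 [D2 [D3 D4]]].
    destruct (Hpa t) as [P1 [P2 [P3 P4]]]. rewrite Rmax_left in P1, P2, P3, P4 by lra.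
    assert (Htau' : Rmax (t - tau) a = t - tau) by (apply Rmax_left; lra).
    unfold hat, uhat. rewrite !(Rmax_left t a) by lra. rewrite Htau'.
    split; [|split; [|split]].
    + eapply is_derive_eq. apply derive_max; eauto. simpl. unfold f_Sh. ring.
    + eapply is_derive_eq. apply derive_max; eauto. simpl. unfold f_Ih. ring.
    + apply (is_derive_ext_loc (fun r => Iv r / (Sv r + Iv r))).
      { apply locally_R. exists (t - a). split. lra. intros y Hy. apply Rabs_def2 in Hy.
        rewrite Rmax_left by lra. reflexivity. }
      eapply is_derive_eq. apply d_ratio; eauto. lra.
      simpl. unfold f_Sv, f_Iv. field. lra.
    + apply m_bound; auto. split. apply exp_pos. apply exp_le1; lra. apply HN; lra.
Qed.

Lemma conv_gen (Phi W h dh : R -> R) (T T0 kap L : R) : 0 < kap -> 0 < L -> T <= T0 ->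
  (forall p q c, T <= p <= q -> (forall s, p <= s <= q -> c <= W s) -> Phi q <= Phi p - c * (q - p)) ->
  (forall t, T <= t -> 0 <= Phi t) ->
  (forall s, T <= s -> kap * h s <= W s) -> (forall s, T <= s -> 0 <= h s) ->
  (forall t, T0 < t -> is_derive h t (dh t) /\ Rabs (dh t) <= L) ->
  forall eps, 0 < eps -> exists M, forall t, M <= t -> h t < eps.
Proof.
  intros Hk HL HT HP HP0 HW Hh0 Hd eps He.
  destruct (barbalat Phi (fun s => kap * h s) (T0 + 1) (kap * L)) with (eps := kap * eps)
    as [M HM].
  - nra.
  - intros; apply HP0; lra.
  - intros. apply Rmult_le_pos; [lra| apply Hh0; lra].
  - intros p q c Hpq Hc. apply HP. lra. intros s Hs. apply (Rle_trans _ (kap * h s)). apply Hc; auto. apply HW. lra.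
  - apply (lipschitz (fun s => kap * h s) (fun s => kap * dh s) T0). lra.
    intros t Ht. destruct (Hd t Ht) as [H1 H2]. split. apply dscal; auto.
    rewrite Rabs_mult, Rabs_right by lra. apply Rmult_le_compat_l; lra.
  - nra.
  - exists M. intros t Ht. specialize (HM t Ht). simpl in HM. nra.
Qed.

Lemma G_bounds (c z M : R) : 0 < c -> 0 < z -> c * G (z / c) <= M ->
  c * exp (- (1 + M / c)) <= z /\ z <= c * (2 * (M / c + 1)).
Proof.
  intros Hc Hz H.
  assert (HG : G (z / c) <= M / c).
  { apply (Rmult_le_reg_l c); auto. replace (c * (M / c)) with M by (field; lra). auto. }
  assert (Hzc : 0 < z / c) by (apply Rdiv_lt_0_compat; auto).
  split.
  - pose proof (G_lower _ _ Hzc HG).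
    replace z with (c * (z / c)) by (field; lra). apply Rmult_le_compat_l; lra.
  - pose proof (G_upper _ _ Hzc HG).
    replace z with (c * (z / c)) by (field; lra). apply Rmult_le_compat_l; lra.
Qed.

Lemma sq_small (a eps : R) : 0 < eps -> a ^ 2 < eps ^ 2 -> Rabs a < eps.
Proof.
  intros He H. destruct (Rlt_le_dec (Rabs a) eps); auto.
  exfalso. assert (Rabs a ^ 2 = a ^ 2) by (rewrite RPow_abs; apply Rabs_right; apply Rle_ge; apply pow2_ge_0).
  assert (eps ^ 2 <= Rabs a ^ 2) by (apply pow_incr; lra). lra.
Qed.

Lemma lim_of (f : R -> R) (l : R) :
  (forall eps, 0 < eps -> exists M, forall t, M <= t -> Rabs (f t - l) < eps) ->
  is_lim f p_infty l.
Proof.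
  intros H. apply is_lim_spec. intros eps. destruct (H eps (cond_pos eps)) as [M HM].
  exists M. intros t Ht. apply HM. lra.
Qed.

Definition conv (f : R -> R) (l : R) := forall eps, 0 < eps -> exists M, forall t, M <= t -> Rabs (f t - l) < eps.

Lemma conv_comb (F f1 f2 : R -> R) (l l1 l2 a b M0 : R) : 0 <= a -> 0 <= b ->
  (forall t, M0 <= t -> Rabs (F t - l) <= a * Rabs (f1 t - l1) + b * Rabs (f2 t - l2)) ->
  conv f1 l1 -> conv f2 l2 -> conv F l.
Proof.
  intros Ha Hb H H1 H2 eps He.
  destruct (H1 (eps / (2 * (a + 1)))) as [M1 HM1]. apply Rdiv_lt_0_compat; lra.
  destruct (H2 (eps / (2 * (b + 1)))) as [M2 HM2]. apply Rdiv_lt_0_compat; lra.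
  exists (Rmax M0 (Rmax M1 M2)). intros t Ht.
  assert (M0 <= t) by (eapply Rle_trans; [apply Rmax_l|exact Ht]).
  assert (M1 <= t) by (eapply Rle_trans; [eapply Rle_trans; [apply Rmax_l|apply Rmax_r]|exact Ht]).
  assert (M2 <= t) by (eapply Rle_trans; [eapply Rle_trans; [apply Rmax_r|apply Rmax_r]|exact Ht]).
  specialize (HM1 t H3). specialize (HM2 t H4). specialize (H t H0).
  assert (a * Rabs (f1 t - l1) <= a * (eps / (2 * (a + 1)))) by (apply Rmult_le_compat_l; lra).
  assert (b * Rabs (f2 t - l2) <= b * (eps / (2 * (b + 1)))) by (apply Rmult_le_compat_l; lra).
  assert (a * (eps / (2 * (a + 1))) < eps / 2).
  { apply (Rmult_lt_reg_r (2 * (a + 1))). lra. field_simplify; nra. }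
  assert (b * (eps / (2 * (b + 1))) < eps / 2).
  { apply (Rmult_lt_reg_r (2 * (b + 1))). lra. field_simplify; nra. }
  lra.
Qed.

Lemma conv_exp (muv : R) : 0 < muv -> conv (fun t => exp (- muv * t)) 0.
Proof.
  intros Hm eps He. exists (- ln (eps / 2) / muv). intros t Ht.
  rewrite Rminus_0_r, Rabs_right by (left; apply exp_pos).
  assert (- muv * t <= ln (eps / 2)).
  { apply (Rmult_le_compat_l muv) in Ht; [|lra]. replace (muv * (- ln (eps / 2) / muv)) with (- ln (eps / 2)) in Ht by (field; lra). lra. }
  assert (exp (- muv * t) <= eps / 2).
  { rewrite <- (exp_ln (eps / 2)) by lra. destruct H as [H|H]. left; apply exp_increasing; auto. rewrite H; lra. }
  lra.
Qed.

Lemma conv_sq (f : R -> R) (l : R) :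
  (forall eps, 0 < eps -> exists M, forall t, M <= t -> (f t - l) ^ 2 < eps) -> conv f l.
Proof.
  intros H eps He. destruct (H (eps ^ 2)) as [M HM]. apply pow_lt; auto.
  exists M. intros t Ht. apply sq_small; auto.
Qed.

Lemma dsq (f : R -> R) c t df : is_derive f t df -> is_derive (fun s => (f s - c) ^ 2) t (2 * (f t - c) * df).
Proof. intros H. auto_derive. exists df; auto. rewrite (Derive_is f t df H). ring. Qed.

Lemma dsq2 (f g : R -> R) a b t df dg : 0 < a -> 0 < b -> is_derive f t df -> is_derive g t dg ->
  is_derive (fun s => (f s / a - g s / b) ^ 2) t (2 * (f t / a - g t / b) * (df / a - dg / b)).
Proof.
  intros Ha Hb H1 H2. auto_derive. split. exists df; auto. split; auto. exists dg; auto.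
  rewrite (Derive_is f t df H1), (Derive_is g t dg H2). field. split; lra.
Qed.

Lemma abs2 (a b A B : R) : Rabs a <= A -> Rabs b <= B -> Rabs (2 * a * b) <= 2 * A * B.
Proof.
  intros H1 H2. rewrite !Rabs_mult. rewrite (Rabs_right 2) by lra.
  pose proof (Rabs_pos a). pose proof (Rabs_pos b).
  apply Rmult_le_compat; try nra.
Qed.

Lemma abstract_conv (bh muh Cvh Chv muv xs ys us tau T D mB : R) (x y u m : R -> R) :
  0 < bh -> 0 < muh -> 0 < Cvh -> 0 < Chv -> 0 < muv -> 0 < xs -> 0 < ys -> 0 < us -> us < 1 -> 0 <= tau -> 0 <= D -> 0 < mB ->
  bh = Cvh * us * xs + muh * xs -> Cvh * us * xs = muh * ys -> Chv * ys * (1 - us) = muv * us ->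
  (forall s, continuity_pt x s /\ continuity_pt y s /\ continuity_pt u s) ->
  (forall s, 0 < x s /\ 0 < y s /\ 0 < u s /\ u s < 1) ->
  (forall t, T < t ->
     is_derive x t (bh - Cvh * u t * x t - muh * x t) /\
     is_derive y t (Cvh * u (t - tau) * x (t - tau) - muh * y t) /\
     is_derive u t (Chv * y t * (1 - u t) - m t * u t) /\
     Rabs (m t - muv) <= D * exp (- muv * t)) ->
  (forall t, T < t -> 0 <= m t <= mB) ->
  conv x xs /\ conv u us /\ conv (fun s => y s / ys - u s / us) 0.
Proof.
  intros Hbh Hmuh HCvh HChv Hmuv Hxs Hys Hus Hus1 Htau HD HmB E1 E2 E3 Hc Hp Hd Hm.
  set (beta := muh * ys). set (k := muh * ys / (muv * us)).
  assert (Hk : 0 < k) by (unfold k; apply Rdiv_lt_0_compat; nra).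
  assert (Hb : 0 < beta) by (unfold beta; nra).
  set (Phi := Phif xs ys us beta k tau D muv x y u).
  set (W := fun s => muh * (x s - xs) ^ 2 / x s + muh * ys / (muv * us) * Chv * y s * (u s - us) ^ 2 / u s
            + muh * ys * G ((y s / ys) / (u s / us))).
  assert (HcoreP : forall p q c, T <= p <= q -> (forall s, p <= s <= q -> c <= W s) -> Phi q <= Phi p - c * (q - p)).
  { intros p q c Hpq Hc'. unfold Phi, beta, k.
    apply (core bh muh Cvh Chv muv xs ys us tau T D x y u m); auto. }
  assert (HW1 : forall s, 0 <= muh * (x s - xs) ^ 2 / x s).
  { intros s. destruct (Hp s) as [? _]. apply Rdiv_le_0_compat; auto. apply Rmult_le_pos. lra. apply pow2_ge_0. }
  assert (HW2 : forall s, 0 <= muh * ys / (muv * us) * Chv * y s * (u s - us) ^ 2 / u s).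
  { intros s. destruct (Hp s) as [_ [? [? _]]]. fold k. apply Rdiv_le_0_compat; auto.
    apply Rmult_le_pos. apply Rmult_le_pos. apply Rmult_le_pos; lra. lra. apply pow2_ge_0. }
  assert (HW3 : forall s, 0 <= muh * ys * G ((y s / ys) / (u s / us))).
  { intros s. destruct (Hp s) as [_ [? [? _]]]. apply Rmult_le_pos. nra. apply G_nonneg.
    apply Rdiv_lt_0_compat; apply Rdiv_lt_0_compat; auto. }
  assert (HW0 : forall s, 0 <= W s) by (intros s; unfold W; specialize (HW1 s); specialize (HW2 s); specialize (HW3 s); lra).
  assert (Hdec : forall t, T <= t -> Phi t <= Phi T).
  { intros t Ht. pose proof (HcoreP T t 0 ltac:(lra) ltac:(intros s _; apply HW0)). lra. }
  assert (Hlow : forall t, xs * G (x t / xs) + ys * G (y t / ys) + k * (us * G (u t / us)) <= Phi t).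
  { intros t. unfold Phi. apply Phi_lower; auto; lra. }
  assert (HGx : forall t, 0 <= xs * G (x t / xs)).
  { intros t. destruct (Hp t) as [? _]. apply Rmult_le_pos. lra. apply G_nonneg. apply Rdiv_lt_0_compat; lra. }
  assert (HGy : forall t, 0 <= ys * G (y t / ys)).
  { intros t. destruct (Hp t) as [_ [? _]]. apply Rmult_le_pos. lra. apply G_nonneg. apply Rdiv_lt_0_compat; lra. }
  assert (HGu : forall t, 0 <= k * (us * G (u t / us))).
  { intros t. destruct (Hp t) as [_ [_ [? _]]]. apply Rmult_le_pos. lra. apply Rmult_le_pos. lra. apply G_nonneg. apply Rdiv_lt_0_compat; lra. }
  assert (HPhi0 : forall t, 0 <= Phi t).
  { intros t. specialize (Hlow t). specialize (HGx t). specialize (HGy t). specialize (HGu t). lra. }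
  set (M0 := Phi T).
  assert (HM0 : 0 <= M0) by apply HPhi0.
  assert (Bx : forall t, T <= t -> xs * exp (- (1 + M0 / xs)) <= x t /\ x t <= xs * (2 * (M0 / xs + 1))).
  { intros t Ht. apply G_bounds; auto. apply Hp. specialize (Hlow t). specialize (Hdec t Ht).
    specialize (HGy t). specialize (HGu t). fold M0 in Hdec. lra. }
  assert (By : forall t, T <= t -> ys * exp (- (1 + M0 / ys)) <= y t /\ y t <= ys * (2 * (M0 / ys + 1))).
  { intros t Ht. apply G_bounds; auto. apply Hp. specialize (Hlow t). specialize (Hdec t Ht).
    specialize (HGx t). specialize (HGu t). fold M0 in Hdec. lra. }
  assert (Bu : forall t, T <= t -> us * exp (- (1 + (M0 / k) / us)) <= u t).
  { intros t Ht. apply (G_bounds us (u t) (M0 / k)); auto. apply Hp.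
    specialize (Hlow t). specialize (Hdec t Ht). specialize (HGx t). specialize (HGy t). fold M0 in Hdec.
    apply (Rmult_le_reg_l k); auto. replace (k * (M0 / k)) with M0 by (field; lra). lra. }
  set (xl := xs * exp (- (1 + M0 / xs))). set (xu := xs * (2 * (M0 / xs + 1))).
  set (yl := ys * exp (- (1 + M0 / ys))). set (yu := ys * (2 * (M0 / ys + 1))).
  set (ul := us * exp (- (1 + (M0 / k) / us))).
  assert (Hxl : 0 < xl) by (unfold xl; pose proof (exp_pos (- (1 + M0 / xs))); nra).
  assert (Hyl : 0 < yl) by (unfold yl; pose proof (exp_pos (- (1 + M0 / ys))); nra).
  assert (Hul : 0 < ul) by (unfold ul; pose proof (exp_pos (- (1 + (M0 / k) / us))); nra).
  assert (Hxu : 0 < xu) by (unfold xu; assert (0 <= M0 / xs) by (apply Rdiv_le_0_compat; lra); nra).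
  assert (Hyu : 0 < yu) by (unfold yu; assert (0 <= M0 / ys) by (apply Rdiv_le_0_compat; lra); nra).
  fold xl xu in Bx. fold yl yu in By. fold ul in Bu.
  assert (Hxs_u : xs <= xu).
  { unfold xu. assert (0 <= M0 / xs) by (apply Rdiv_le_0_compat; lra). nra. }
  assert (Cx : conv x xs).
  { apply conv_sq. intros eps He.
    apply (conv_gen Phi W (fun s => (x s - xs) ^ 2) (fun s => 2 * (x s - xs) * (bh - Cvh * u s * x s - muh * x s))
             T (T + tau) (muh / xu) (2 * (xu + xs) * (bh + Cvh * xu + muh * xu))); auto.
    - apply Rdiv_lt_0_compat; lra.
    - assert (0 < Cvh * xu) by nra. assert (0 < muh * xu) by nra.
      apply Rmult_lt_0_compat; lra.
    - lra.
    - intros s Hs. destruct (Bx s Hs) as [B1 B2]. destruct (Hp s) as [Px _].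
      unfold W. specialize (HW2 s). specialize (HW3 s).
      assert (muh / xu * (x s - xs) ^ 2 <= muh * (x s - xs) ^ 2 / x s).
      { unfold Rdiv. rewrite (Rmult_comm muh (/ xu)), Rmult_assoc, (Rmult_comm (/ xu)).
        apply Rmult_le_compat_l. apply Rmult_le_pos; [lra|apply pow2_ge_0].
        apply Rinv_le_contravar; lra. }
      lra.
    - intros s _. apply pow2_ge_0.
    - intros t Ht. destruct (Hd t ltac:(lra)) as [Dx _]. split.
      + apply dsq; auto.
      + destruct (Bx t ltac:(lra)) as [B1 B2]. destruct (Hp t) as [Px [_ [Pu Pu1]]].
        apply abs2.
        * apply Rabs_le. lra.
        * apply Rabs_le. assert (0 < u t * x t) by nra. assert (u t * x t <= x t) by nra. nra. }
  assert (Cu : conv u us).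
  { apply conv_sq. intros eps He.
    apply (conv_gen Phi W (fun s => (u s - us) ^ 2) (fun s => 2 * (u s - us) * (Chv * y s * (1 - u s) - m s * u s))
             T (T + tau) (k * Chv * yl) (2 * 1 * (Chv * yu + mB))); auto.
    - apply Rmult_lt_0_compat; [apply Rmult_lt_0_compat|]; lra.
    - assert (0 < Chv * yu) by nra. lra.
    - lra.
    - intros s Hs. destruct (By s Hs) as [B1 B2]. destruct (Hp s) as [Px [Py [Pu Pu1]]].
      unfold W. specialize (HW1 s). specialize (HW3 s). fold k.
      assert (k * Chv * yl * (u s - us) ^ 2 <= k * Chv * y s * (u s - us) ^ 2 / u s).
      { assert (Hyl2 : yl <= y s / u s).
        { apply (Rle_trans _ (y s)); auto. apply (Rmult_le_reg_r (u s)); auto.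
          unfold Rdiv. rewrite Rmult_assoc, Rinv_l, Rmult_1_r by lra. nra. }
        replace (k * Chv * y s * (u s - us) ^ 2 / u s) with ((k * Chv * (u s - us) ^ 2) * (y s / u s)) by (field; lra).
        replace (k * Chv * yl * (u s - us) ^ 2) with ((k * Chv * (u s - us) ^ 2) * yl) by ring.
        apply Rmult_le_compat_l; auto. apply Rmult_le_pos. nra. apply pow2_ge_0. }
      lra.
    - intros s _. apply pow2_ge_0.
    - intros t Ht. destruct (Hd t ltac:(lra)) as [_ [_ [Du _]]]. split.
      + apply dsq; auto.
      + destruct (By t ltac:(lra)) as [B1 B2]. destruct (Hp t) as [Px [Py [Pu Pu1]]].
        destruct (Hm t ltac:(lra)) as [Hm1 Hm2].
        apply abs2.
        * apply Rabs_le. lra.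
        * apply Rabs_le. assert (0 <= y t * (1 - u t) <= y t) by (split; nra).
          assert (0 <= m t * u t <= mB) by (split; nra). nra. }
  set (q := Rmax 1 ((yu / ys) / (ul / us))).
  assert (Hq1 : 1 <= q) by apply Rmax_l.
  assert (Cyu : conv (fun s => y s / ys - u s / us) 0).
  { apply conv_sq. intros eps He.
    destruct (conv_gen Phi W (fun s => (y s / ys - u s / us) ^ 2)
             (fun s => 2 * (y s / ys - u s / us) * ((Cvh * u (s - tau) * x (s - tau) - muh * y s) / ys
                                                    - (Chv * y s * (1 - u s) - m s * u s) / us))
             T (T + tau) (beta * us ^ 2 / (2 * q ^ 2))
             (2 * (yu / ys + 1 / us) * ((Cvh * xu + muh * yu) / ys + (Chv * yu + mB) / us)))
      with (eps := eps) as [M HM]; auto.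
    - apply Rdiv_lt_0_compat. apply Rmult_lt_0_compat; auto. apply pow_lt; auto.
      apply Rmult_lt_0_compat. lra. apply pow_lt; lra.
    - apply Rmult_lt_0_compat. apply Rmult_lt_0_compat. lra.
      apply Rplus_lt_0_compat; apply Rdiv_lt_0_compat; lra.
      apply Rplus_lt_0_compat; apply Rdiv_lt_0_compat; nra.
    - lra.
    - intros s Hs. destruct (By s Hs) as [B1 B2]. pose proof (Bu s Hs) as B3.
      destruct (Hp s) as [Px [Py [Pu Pu1]]].
      unfold W. specialize (HW1 s). specialize (HW2 s). fold beta.
      set (Y := y s / ys). set (U := u s / us).
      assert (HY : 0 < Y) by (apply Rdiv_lt_0_compat; lra).
      assert (HU : 0 < U) by (apply Rdiv_lt_0_compat; lra).
      assert (HYU : Y / U <= q).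
      { apply (Rle_trans _ ((yu / ys) / (ul / us))); [|apply Rmax_r].
        unfold Y, U. unfold Rdiv.
        assert (Hius : 0 < / us) by (apply Rinv_0_lt_compat; lra).
        assert (Hiys : 0 < / ys) by (apply Rinv_0_lt_compat; lra).
        apply Rmult_le_compat. apply Rmult_le_pos; lra.
        left; apply Rinv_0_lt_compat; apply Rmult_lt_0_compat; lra.
        apply Rmult_le_compat_r; [left; apply Rinv_0_lt_compat|]; lra.
        apply Rinv_le_contravar. apply Rmult_lt_0_compat; lra. apply Rmult_le_compat_r; [left; apply Rinv_0_lt_compat|]; lra. }
      pose proof (G_quad (Y / U) q ltac:(apply Rdiv_lt_0_compat; auto) HYU Hq1) as GQ.
      assert (Hsq : us ^ 2 * (Y - U) ^ 2 <= (Y / U - 1) ^ 2).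
      { replace ((Y / U - 1) ^ 2) with ((Y - U) ^ 2 / U ^ 2) by (field; lra).
        assert (HU2 : us ^ 2 * U ^ 2 <= 1).
        { replace (us ^ 2 * U ^ 2) with (u s ^ 2) by (unfold U; field; lra). nra. }
        apply (Rmult_le_reg_r (U ^ 2)). apply pow_lt; auto.
        replace ((Y - U) ^ 2 / U ^ 2 * U ^ 2) with ((Y - U) ^ 2) by (field; lra).
        assert (0 <= (Y - U) ^ 2) by apply pow2_ge_0. nra. }
      assert (Hq2 : 0 < 2 * q ^ 2) by (apply Rmult_lt_0_compat; [lra|apply pow_lt; lra]).
      assert (beta * us ^ 2 / (2 * q ^ 2) * (Y - U) ^ 2 <= beta * G (Y / U)).
      { apply (Rle_trans _ (beta * ((Y / U - 1) ^ 2 / (2 * q ^ 2)))).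
        - replace (beta * us ^ 2 / (2 * q ^ 2) * (Y - U) ^ 2) with (beta * ((us ^ 2 * (Y - U) ^ 2) / (2 * q ^ 2))) by (field; lra).
          apply Rmult_le_compat_l; [lra|]. unfold Rdiv. apply Rmult_le_compat_r; auto.
          left; apply Rinv_0_lt_compat; auto.
        - apply Rmult_le_compat_l; lra. }
      unfold beta in *. lra.
    - intros s _. apply pow2_ge_0.
    - intros t Ht. destruct (Hd t ltac:(lra)) as [_ [Dy [Du _]]]. split.
      + apply dsq2; auto.
      + destruct (By t ltac:(lra)) as [B1 B2]. destruct (Hp t) as [Px [Py [Pu Pu1]]].
        destruct (Bx (t - tau) ltac:(lra)) as [B3 B4]. destruct (Hp (t - tau)) as [Pxd [_ [Pud Pud1]]].
        destruct (Hm t ltac:(lra)) as [Hm1 Hm2].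
        apply abs2.
        * apply Rabs_le. assert (0 < y t / ys <= yu / ys).
          { split. apply Rdiv_lt_0_compat; lra. unfold Rdiv; apply Rmult_le_compat_r; [left; apply Rinv_0_lt_compat|]; lra. }
          assert (0 < u t / us <= 1 / us).
          { split. apply Rdiv_lt_0_compat; lra. unfold Rdiv; apply Rmult_le_compat_r; [left; apply Rinv_0_lt_compat|]; lra. }
          lra.
        * assert (Rabs (Cvh * u (t - tau) * x (t - tau) - muh * y t) <= Cvh * xu + muh * yu).
          { apply Rabs_le. assert (0 < u (t - tau) * x (t - tau) <= xu) by (split; nra). nra. }
          assert (Rabs (Chv * y t * (1 - u t) - m t * u t) <= Chv * yu + mB).
          { apply Rabs_le. assert (0 <= y t * (1 - u t) <= y t) by (split; nra).
            assert (0 <= m t * u t <= mB) by (split; nra). nra. }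
          unfold Rminus at 1. eapply Rle_trans. apply Rabs_triang. rewrite Rabs_Ropp.
          unfold Rdiv. rewrite !Rabs_mult. rewrite !(Rabs_right (/ _)) by (left; apply Rinv_0_lt_compat; lra).
          apply Rplus_le_compat; apply Rmult_le_compat_r; try (left; apply Rinv_0_lt_compat; lra); auto.
    - exists M. intros t Ht. rewrite Rminus_0_r. auto. }
  auto.
Qed.

Lemma Dc_nonneg bv muv N0 : 0 < bv -> 0 < muv -> 0 < N0 -> 0 <= Dc bv muv N0.
Proof.
  intros. unfold Dc. assert (0 < bv / muv) by (apply Rdiv_lt_0_compat; lra).
  apply Rdiv_le_0_compat. apply Rmult_le_pos. lra. apply Rabs_pos.
  apply Rmult_lt_0_compat; auto. apply Rmin_pos; lra.
Qed.

Lemma attract (bh bv muh muv Cvh Chv tau : R) (Sh Ih Sv Iv : R -> R) :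
  0 < bh -> 0 < bv -> 0 < muh -> 0 < muv -> 0 < Cvh -> 0 < Chv -> 0 <= tau ->
  muv * muh ^ 2 < Chv * Cvh * bh ->
  init_in_D tau Sh Ih Sv Iv ->
  is_solution bh bv muh muv Cvh Chv tau Sh Ih Sv Iv ->
  is_lim Sh p_infty (xs_ bh muh muv Cvh Chv) /\ is_lim Ih p_infty (ys_ bh muh muv Cvh Chv) /\
  is_lim Sv p_infty ((1 - us_ bh muh muv Cvh Chv) * (bv / muv)) /\
  is_lim Iv p_infty (us_ bh muh muv Cvh Chv * (bv / muv)).
Proof.
  intros Hbh Hbv Hmuh Hmuv HCvh HChv Htau HR Hinit Hsol.
  destruct (eq_props bh bv muh muv Cvh Chv) as [Hus [Hus1 [Hxs [Hys [E1 [E2 E3]]]]]]; auto.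
  set (us := us_ bh muh muv Cvh Chv) in *. set (xs := xs_ bh muh muv Cvh Chv) in *.
  set (ys := ys_ bh muh muv Cvh Chv) in *.
  destruct (sol_facts bh bv muh muv Cvh Chv tau Sh Ih Sv Iv) as [_ [_ [_ [_ [HN Hpos]]]]]; auto.
  assert (HN0 : 0 < Sv 0 + Iv 0).
  { destruct Hinit as [_ [_ [_ [_ [Hip _]]]]]. destruct (Hip 0 ltac:(lra)) as [? [? [? [? ?]]]]. auto. }
  set (N0 := Sv 0 + Iv 0) in *. set (Ns := bv / muv).
  assert (HNs : 0 < Ns) by (unfold Ns; apply Rdiv_lt_0_compat; lra).
  assert (Hsol' := Hsol). destruct Hsol' as [_ [_ [_ [_ Hd]]]].
  assert (Hc1 : forall s, continuity_pt (hat Sh 1) s /\ continuity_pt (hat Ih 1) s /\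
             continuity_pt (hat Sv 1) s /\ continuity_pt (hat Iv 1) s).
  { intros s. unfold hat. repeat split; apply hat_cont_pos; try lra; intros t Ht; destruct (Hd t Ht) as [? [? [? ?]]]; eauto. }
  destruct (core_hyps bh bv muh muv Cvh Chv tau 1 Sh Ih Sv Iv) as [Cc [Cp Cd]]; auto.
  { lra. }
  { intros s Hs. apply Hpos. lra. }
  set (Nmin := Rmin N0 Ns).
  assert (HNmin : 0 < Nmin) by (apply Rmin_pos; lra).
  assert (HNb : forall t, 0 <= t -> Nmin <= Sv t + Iv t <= Rmax N0 Ns).
  { intros t Ht. rewrite HN by auto. fold Ns.
    assert (0 < exp (- muv * t) <= 1) by (split; [apply exp_pos|apply exp_le1; lra]).
    split. apply N_lower; auto. apply N_upper; auto. }
  destruct (abstract_conv bh muh Cvh Chv muv xs ys us tau (1 + tau) (Dc bv muv N0) (bv / Nmin)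
              (hat Sh 1) (hat Ih 1) (uhat Sv Iv 1) (fun r => bv / (Sv r + Iv r))) as [Cx [Cu Cyu]]; auto.
  { apply Dc_nonneg; auto. }
  { apply Rdiv_lt_0_compat; auto. }
  { intros t Ht. destruct (HNb t ltac:(lra)) as [B1 B2]. split.
    - apply Rdiv_le_0_compat; lra.
    - unfold Rdiv. apply Rmult_le_compat_l. lra. apply Rinv_le_contravar; lra. }
  assert (Hx1 : forall t, 1 <= t -> hat Sh 1 t = Sh t) by (intros; unfold hat; rewrite Rmax_left; lra).
  assert (Hy1 : forall t, 1 <= t -> hat Ih 1 t = Ih t) by (intros; unfold hat; rewrite Rmax_left; lra).
  assert (Hu1 : forall t, 1 <= t -> uhat Sv Iv 1 t = Iv t / (Sv t + Iv t)) by (intros; unfold uhat; rewrite Rmax_left; lra).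
  assert (Ce : conv (fun t => exp (- muv * t)) 0) by (apply conv_exp; auto).
  assert (CIv : conv Iv (us * Ns)).
  { apply (conv_comb Iv (uhat Sv Iv 1) (fun t => exp (- muv * t)) (us * Ns) us 0 (Rmax N0 Ns) (us * Rabs (N0 - Ns)) 1); auto.
    - apply (Rle_trans _ N0). lra. apply Rmax_l.
    - apply Rmult_le_pos. lra. apply Rabs_pos.
    - intros t Ht. rewrite Hu1 by auto. destruct (HNb t ltac:(lra)) as [B1 B2].
      replace (Iv t - us * Ns) with ((Iv t / (Sv t + Iv t) - us) * (Sv t + Iv t) + us * ((Sv t + Iv t) - Ns)) by (field; lra).
      rewrite HN by lra. fold N0 Ns. rewrite Rminus_0_r.
      replace (Ns + (N0 - Ns) * exp (- muv * t) - Ns) with ((N0 - Ns) * exp (- muv * t)) by ring.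
      rewrite <- HN by lra.
      eapply Rle_trans. apply Rabs_triang. rewrite !Rabs_mult. rewrite (Rabs_right us) by lra.
      rewrite (Rabs_right (Sv t + Iv t)) by lra.
      assert (Rabs (Iv t / (Sv t + Iv t) - us) * (Sv t + Iv t) <= Rmax N0 Ns * Rabs (Iv t / (Sv t + Iv t) - us)).
      { rewrite Rmult_comm. apply Rmult_le_compat_r. apply Rabs_pos. auto. }
      lra. }
  assert (CSv : conv Sv ((1 - us) * Ns)).
  { apply (conv_comb Sv (fun t => exp (- muv * t)) Iv ((1 - us) * Ns) 0 (us * Ns) (Rabs (N0 - Ns)) 1 0); auto.
    - apply Rabs_pos.
    - lra.
    - intros t Ht. replace (Sv t - (1 - us) * Ns) with ((Sv t + Iv t - Ns) - (Iv t - us * Ns)) by ring.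
      rewrite HN by lra. fold N0 Ns. rewrite Rminus_0_r.
      replace (Ns + (N0 - Ns) * exp (- muv * t) - Ns) with ((N0 - Ns) * exp (- muv * t)) by ring.
      unfold Rminus at 1. eapply Rle_trans. apply Rabs_triang. rewrite Rabs_Ropp, Rabs_mult. lra. }
  assert (CSh : conv Sh xs).
  { apply (conv_comb Sh (hat Sh 1) (hat Sh 1) xs xs xs 1 0 1); auto; try lra.
    intros t Ht. rewrite Hx1 by auto. pose proof (Rabs_pos (Sh t - xs)). lra. }
  assert (CIh : conv Ih ys).
  { apply (conv_comb Ih (fun s => hat Ih 1 s / ys - uhat Sv Iv 1 s / us) (uhat Sv Iv 1) ys 0 us ys (ys / us) 1); auto.
    - lra.
    - apply Rdiv_le_0_compat; lra.
    - intros t Ht. rewrite <- Hy1 by auto. rewrite Rminus_0_r.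
      replace (hat Ih 1 t - ys) with (ys * (hat Ih 1 t / ys - uhat Sv Iv 1 t / us) + (ys / us) * (uhat Sv Iv 1 t - us)) by (field; lra).
      eapply Rle_trans. apply Rabs_triang. rewrite !Rabs_mult.
      rewrite (Rabs_right ys) by lra. rewrite (Rabs_right (ys / us)) by (left; apply Rdiv_lt_0_compat; lra). lra. }
  repeat split; apply lim_of; auto.
Qed.

Lemma G_near (z : R) : Rabs (z - 1) <= 1 / 2 -> G z <= 2 * (z - 1) ^ 2.
Proof.
  intros H.
  assert (Hz : 1 / 2 <= z) by (pose proof (Rle_abs (- (z - 1))) as H'; rewrite Rabs_Ropp in H'; lra).
  eapply Rle_trans. apply G_le_sq. lra.
  apply (Rmult_le_reg_r z). lra.
  replace ((z - 1) ^ 2 / z * z) with ((z - 1) ^ 2) by (field; lra).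
  assert (0 <= (z - 1) ^ 2) by apply pow2_ge_0. nra.
Qed.

Lemma G_close (c z M : R) : 0 < c -> 0 < z -> c * G (z / c) <= M -> M <= c / 4 -> (z - c) ^ 2 <= 18 * c * M.
Proof.
  intros Hc Hz H HM.
  assert (HG : G (z / c) <= M / c).
  { apply (Rmult_le_reg_l c); auto. replace (c * (M / c)) with M by (field; lra). auto. }
  assert (Hzc : 0 < z / c) by (apply Rdiv_lt_0_compat; auto).
  assert (HM0 : 0 <= M) by (pose proof (G_nonneg _ Hzc); nra).
  assert (HMc : M / c <= 1 / 4) by (apply (Rmult_le_reg_l c); auto; field_simplify; lra).
  pose proof (G_upper _ _ Hzc HG).
  pose proof (G_quad (z / c) 3 Hzc ltac:(lra) ltac:(lra)).
  assert ((z / c - 1) ^ 2 <= 18 * (M / c)) by lra.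
  replace ((z - c) ^ 2) with (c ^ 2 * (z / c - 1) ^ 2) by (field; lra).
  replace (18 * c * M) with (c ^ 2 * (18 * (M / c))) by (field; lra).
  apply Rmult_le_compat_l. apply pow2_ge_0. auto.
Qed.

Lemma u_close (Sv Iv us Ns d : R) : 0 < us < 1 -> 0 < Ns -> 0 < d -> d <= Ns / 4 ->
  Rabs (Sv - (1 - us) * Ns) < d -> Rabs (Iv - us * Ns) < d ->
  Rabs (Iv / (Sv + Iv) - us) <= 6 / Ns * d.
Proof.
  intros Hus HNs Hd HdN H1 H2.
  apply Rabs_def2 in H1. apply Rabs_def2 in H2.
  assert (HN : Ns / 2 <= Sv + Iv) by lra.
  replace (Iv / (Sv + Iv) - us) with ((Ns * (Iv - us * Ns) - us * Ns * ((Sv + Iv) - Ns)) / ((Sv + Iv) * Ns)) by (field; lra).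
  assert (HNN : 0 < (Sv + Iv) * Ns) by (apply Rmult_lt_0_compat; lra).
  rewrite Rabs_div by lra. rewrite (Rabs_right ((Sv + Iv) * Ns)) by lra.
  apply (Rmult_le_reg_r ((Sv + Iv) * Ns)). lra.
  replace (Rabs (Ns * (Iv - us * Ns) - us * Ns * (Sv + Iv - Ns)) / ((Sv + Iv) * Ns) * ((Sv + Iv) * Ns))
    with (Rabs (Ns * (Iv - us * Ns) - us * Ns * (Sv + Iv - Ns))) by (field; lra).
  assert (Rabs (Ns * (Iv - us * Ns) - us * Ns * (Sv + Iv - Ns)) <= Ns * d + us * Ns * (2 * d)).
  { assert (A1 : Ns * (Iv - us * Ns) <= Ns * d) by (apply Rmult_le_compat_l; lra).
    assert (A2 : Ns * (- d) <= Ns * (Iv - us * Ns)) by (apply Rmult_le_compat_l; lra).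
    assert (HuN : 0 <= us * Ns) by nra.
    assert (A3 : us * Ns * (Sv + Iv - Ns) <= us * Ns * (2 * d)) by (apply Rmult_le_compat_l; lra).
    assert (A4 : us * Ns * (- (2 * d)) <= us * Ns * (Sv + Iv - Ns)) by (apply Rmult_le_compat_l; lra).
    apply Rabs_le. split; lra. }
  assert (HNd : 0 < Ns * d) by nra.
  assert (us * (Ns * d) <= 1 * (Ns * d)) by (apply Rmult_le_compat_r; lra).
  assert (Ns * d + us * Ns * (2 * d) <= 3 * Ns * d) by lra.
  assert (6 / Ns * d * ((Sv + Iv) * Ns) = 6 * d * (Sv + Iv)) by (field; lra).
  assert ((Ns / 2) * d <= (Sv + Iv) * d) by (apply Rmult_le_compat_r; lra).
  lra.
Qed.

Lemma pick6 (a1 a2 a3 a4 a5 a6 : R) : 0 < a1 -> 0 < a2 -> 0 < a3 -> 0 < a4 -> 0 < a5 -> 0 < a6 ->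
  exists d, 0 < d /\ d <= a1 /\ d <= a2 /\ d <= a3 /\ d <= a4 /\ d <= a5 /\ d <= a6.
Proof.
  intros. exists (Rmin a1 (Rmin a2 (Rmin a3 (Rmin a4 (Rmin a5 a6))))).
  repeat split.
  - repeat apply Rmin_pos; auto.
  - apply Rmin_l.
  - eapply Rle_trans; [apply Rmin_r|]. apply Rmin_l.
  - eapply Rle_trans; [apply Rmin_r|]. eapply Rle_trans; [apply Rmin_r|]. apply Rmin_l.
  - eapply Rle_trans; [apply Rmin_r|]. eapply Rle_trans; [apply Rmin_r|]. eapply Rle_trans; [apply Rmin_r|]. apply Rmin_l.
  - eapply Rle_trans; [apply Rmin_r|]. eapply Rle_trans; [apply Rmin_r|]. eapply Rle_trans; [apply Rmin_r|].
    eapply Rle_trans; [apply Rmin_r|]. apply Rmin_l.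
  - eapply Rle_trans; [apply Rmin_r|]. eapply Rle_trans; [apply Rmin_r|]. eapply Rle_trans; [apply Rmin_r|].
    eapply Rle_trans; [apply Rmin_r|]. apply Rmin_r.
Qed.

Lemma hat_cont_init (f : R -> R) tau : 0 <= tau -> cont_on (- tau) 0 f ->
  filterlim f (at_right 0) (locally (f 0)) -> (forall t, 0 < t -> exists d, is_derive f t d) ->
  forall s, continuity_pt (hat f (- tau)) s.
Proof.
  intros Htau Hc Hr Hd s. apply cpt_continuity_pt. unfold hat. apply ext2_cpt with (b := 0). lra.
  - intros t Ht eps He. apply (within_cpt (fun s => - tau <= s <= 0) f t (Hc t Ht) eps He).
  - intros eps He. destruct (at_right_cpt f 0 (f 0) Hr eps He) as [d [Hd0 H]]. exists d. split; auto.
  - intros t Ht. destruct (Hd t Ht) as [d Hd']. eapply derive_cpt; eauto.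
Qed.

Lemma RInt_bound (g : R -> R) a b c : a <= b -> (forall x, continuity_pt g x) ->
  (forall x, a < x < b -> g x <= c) -> RInt g a b <= (b - a) * c.
Proof.
  intros Hab Hg H.
  assert (RInt g a b <= RInt (fun _ => c) a b).
  { apply RInt_le; auto. apply ex_RInt_cont; auto. apply ex_RInt_cont. intros; apply cp_const. }
  rewrite RInt_const in H0. exact H0.
Qed.

Lemma G_term (c z d : R) : 0 < c -> Rabs (z - c) <= d -> d <= c / 2 -> c * G (z / c) <= 2 * d ^ 2 / c.
Proof.
  intros Hc H Hd.
  assert (Hz : Rabs (z / c - 1) <= d / c).
  { replace (z / c - 1) with ((z - c) / c) by (field; lra). rewrite Rabs_div by lra.
    rewrite (Rabs_right c) by lra. unfold Rdiv. apply Rmult_le_compat_r; auto. left; apply Rinv_0_lt_compat; lra. }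
  assert (d / c <= 1 / 2) by (apply (Rmult_le_reg_l c); auto; field_simplify; lra).
  pose proof (G_near (z / c) ltac:(lra)).
  assert ((z / c - 1) ^ 2 <= (d / c) ^ 2).
  { rewrite <- (Rsqr_pow2 (z / c - 1)), <- (Rsqr_pow2 (d / c)). rewrite (Rsqr_abs (z / c - 1)).
    apply Rsqr_incr_1; auto. apply Rabs_pos. pose proof (Rabs_pos (z / c - 1)). lra. }
  apply (Rle_trans _ (c * (2 * (d / c) ^ 2))).
  - apply Rmult_le_compat_l; lra.
  - right. field. lra.
Qed.

Lemma stable (bh bv muh muv Cvh Chv tau : R) :
  0 < bh -> 0 < bv -> 0 < muh -> 0 < muv -> 0 < Cvh -> 0 < Chv -> 0 <= tau ->
  muv * muh ^ 2 < Chv * Cvh * bh ->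
  let xs := xs_ bh muh muv Cvh Chv in let ys := ys_ bh muh muv Cvh Chv in
  let us := us_ bh muh muv Cvh Chv in
  forall eps, 0 < eps -> exists delta, 0 < delta /\
     forall Sh Ih Sv Iv : R -> R,
       init_in_D tau Sh Ih Sv Iv ->
       is_solution bh bv muh muv Cvh Chv tau Sh Ih Sv Iv ->
       (forall t, - tau <= t <= 0 ->
          Rabs (Sh t - xs) < delta /\ Rabs (Ih t - ys) < delta /\
          Rabs (Sv t - (1 - us) * (bv / muv)) < delta /\ Rabs (Iv t - us * (bv / muv)) < delta) ->
       forall t, - tau <= t ->
          Rabs (Sh t - xs) < eps /\ Rabs (Ih t - ys) < eps /\
          Rabs (Sv t - (1 - us) * (bv / muv)) < eps /\ Rabs (Iv t - us * (bv / muv)) < eps.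
Proof.
  intros Hbh Hbv Hmuh Hmuv HCvh HChv Htau HR xs ys us eps Heps.
  destruct (eq_props bh bv muh muv Cvh Chv) as [Hus [Hus1 [Hxs [Hys [E1 [E2 E3]]]]]]; auto.
  fold us xs ys in Hus, Hus1, Hxs, Hys, E1, E2, E3.
  set (Ns := bv / muv).
  assert (HNs : 0 < Ns) by (unfold Ns; apply Rdiv_lt_0_compat; lra).
  set (beta := muh * ys). set (k := muh * ys / (muv * us)).
  assert (Hk : 0 < k) by (unfold k; apply Rdiv_lt_0_compat; nra).
  assert (Hb : 0 < beta) by (unfold beta; nra).
  set (K1 := 6 / Ns). assert (HK1 : 0 < K1) by (unfold K1; apply Rdiv_lt_0_compat; lra).
  set (K2 := (1 + xs * K1) / (xs * us)).
  assert (HK2 : 0 < K2) by (unfold K2; apply Rdiv_lt_0_compat; nra).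
  set (Cc := 2 / xs + 2 / ys + 2 * k * K1 ^ 2 / us + 2 * beta * tau * K2 ^ 2 + 4 * k / Ns).
  assert (HCc : 0 < Cc).
  { unfold Cc. assert (0 < 2 / xs) by (apply Rdiv_lt_0_compat; lra).
    assert (0 < 2 / ys) by (apply Rdiv_lt_0_compat; lra).
    assert (0 <= 2 * k * K1 ^ 2 / us) by (apply Rdiv_le_0_compat; [apply Rmult_le_pos; [lra|apply pow2_ge_0]|lra]).
    assert (0 <= 2 * beta * tau * K2 ^ 2) by (apply Rmult_le_pos; [nra|apply pow2_ge_0]).
    assert (0 < 4 * k / Ns) by (apply Rdiv_lt_0_compat; lra). lra. }
  set (r := eps / (4 * (Ns + 1))).
  assert (Hr : 0 < r) by (unfold r; apply Rdiv_lt_0_compat; lra).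
  destruct (pick6 (eps ^ 2 / (36 * xs)) (eps ^ 2 / (36 * ys)) (k * r ^ 2 / (36 * us)) (xs / 4) (ys / 4) (k * us / 4))
    as [eta [Heta [Heta1 [Heta2 [Heta3 [Heta4 [Heta5 Heta6]]]]]]];
    try (apply Rdiv_lt_0_compat; [|lra]; try apply pow_lt; try lra; apply Rmult_lt_0_compat; try lra; apply pow_lt; lra);
    try (apply Rdiv_lt_0_compat; nra).
  destruct (pick6 (eps / 8) (1 / 2) (Rmin (xs / 2) (ys / 2)) (Rmin (Rmin ((1 - us) * Ns / 2) (us * Ns / 2)) (Ns / 4))
                  (Rmin (us / (2 * K1)) (1 / (2 * K2))) (eta / Cc))
    as [delta [Hd [Hd1 [Hd2 [Hd3 [Hd4 [Hd5 Hd6]]]]]]].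
  { lra. } { lra. } { apply Rmin_pos; lra. }
  { apply Rmin_pos; [apply Rmin_pos|]; nra. }
  { apply Rmin_pos; apply Rdiv_lt_0_compat; nra. }
  { apply Rdiv_lt_0_compat; lra. }
  exists delta. split; auto.
  assert (Hdx : delta <= xs / 2) by (eapply Rle_trans; [apply Hd3|apply Rmin_l]).
  assert (Hdy : delta <= ys / 2) by (eapply Rle_trans; [apply Hd3|apply Rmin_r]).
  assert (Hdsv : delta <= (1 - us) * Ns / 2) by (eapply Rle_trans; [apply Hd4|]; eapply Rle_trans; [apply Rmin_l|apply Rmin_l]).
  assert (Hdiv : delta <= us * Ns / 2) by (eapply Rle_trans; [apply Hd4|]; eapply Rle_trans; [apply Rmin_l|apply Rmin_r]).
  assert (HdN : delta <= Ns / 4) by (eapply Rle_trans; [apply Hd4|apply Rmin_r]).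
  assert (HdK1 : delta <= us / (2 * K1)) by (eapply Rle_trans; [apply Hd5|apply Rmin_l]).
  assert (HdK2 : delta <= 1 / (2 * K2)) by (eapply Rle_trans; [apply Hd5|apply Rmin_r]).
  assert (HK1d : K1 * delta <= us / 2).
  { apply (Rmult_le_compat_l K1) in HdK1; [|lra]. replace (K1 * (us / (2 * K1))) with (us / 2) in HdK1 by (field; lra). lra. }
  assert (HK2d : K2 * delta <= 1 / 2).
  { apply (Rmult_le_compat_l K2) in HdK2; [|lra]. replace (K2 * (1 / (2 * K2))) with (1 / 2) in HdK2 by (field; lra). lra. }
  assert (HCd : Cc * delta <= eta).
  { apply (Rmult_le_compat_l Cc) in Hd6; [|lra]. replace (Cc * (eta / Cc)) with eta in Hd6 by (field; lra). lra. }
  intros Sh Ih Sv Iv Hinit Hsol Hclose t Ht.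
  destruct (Rle_lt_dec t 0) as [Ht0|Ht0].
  { destruct (Hclose t ltac:(lra)) as [? [? [? ?]]]. repeat split; lra. }
  fold Ns in Hclose.
  destruct (sol_facts bh bv muh muv Cvh Chv tau Sh Ih Sv Iv) as [_ [_ [_ [_ [HN Hpos]]]]]; auto.
  set (N0 := Sv 0 + Iv 0) in *.
  destruct (Hclose 0 ltac:(lra)) as [C1 [C2 [C3 C4]]].
  assert (HN0N : Rabs (N0 - Ns) <= 2 * delta).
  { unfold N0. replace (Sv 0 + Iv 0 - Ns) with ((Sv 0 - (1 - us) * Ns) + (Iv 0 - us * Ns)) by ring.
    eapply Rle_trans. apply Rabs_triang. lra. }
  assert (HN0 : Ns / 2 <= N0).
  { pose proof (Rle_abs (- (N0 - Ns))) as HH. rewrite Rabs_Ropp in HH. lra. }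
  assert (Hposm : forall s, - tau <= s -> 0 < Sh s /\ 0 < Ih s /\ 0 < Sv s /\ 0 < Iv s).
  { intros s Hs. destruct (Rle_lt_dec s 0).
    - destruct (Hclose s ltac:(lra)) as [D1 [D2 [D3 D4]]].
      apply Rabs_def2 in D1. apply Rabs_def2 in D2. apply Rabs_def2 in D3. apply Rabs_def2 in D4.
      repeat split; lra.
    - apply Hpos; auto. }
  assert (Hinit' := Hinit). destruct Hinit' as [I1 [I2 [I3 [I4 _]]]].
  assert (Hsol' := Hsol). destruct Hsol' as [R1 [R2 [R3 [R4 Hd']]]].
  assert (Hcm : forall s, continuity_pt (hat Sh (- tau)) s /\ continuity_pt (hat Ih (- tau)) s /\
             continuity_pt (hat Sv (- tau)) s /\ continuity_pt (hat Iv (- tau)) s).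
  { intros s. repeat split; apply hat_cont_init; auto; intros t' Ht'; destruct (Hd' t' Ht') as [? [? [? ?]]]; eauto. }
  destruct (core_hyps bh bv muh muv Cvh Chv tau (- tau) Sh Ih Sv Iv) as [Cc' [Cp Cd]]; auto.
  { lra. }
  { unfold N0 in HN0. lra. }
  set (x := hat Sh (- tau)). set (y := hat Ih (- tau)). set (u := uhat Sv Iv (- tau)).
  set (D := Dc bv muv N0).
  assert (HD : 0 <= D) by (apply Dc_nonneg; lra).
  set (Phi := Phif xs ys us beta k tau D muv x y u).
  assert (Hdec : Phi t <= Phi 0).
  { pose proof (core bh muh Cvh Chv muv xs ys us tau 0 D x y u (fun r => bv / (Sv r + Iv r))
       Hmuh Hmuv Hxs Hys Hus Hus1 Htau HD E1 E2 E3 Cc' Cp) as Hcore.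
    specialize (Hcore ltac:(intros t' Ht'; apply Cd; lra) 0 t 0 ltac:(lra)).
    assert (HW : forall s, 0 <= s <= t -> 0 <= muh * (x s - xs) ^ 2 / x s
            + muh * ys / (muv * us) * Chv * y s * (u s - us) ^ 2 / u s + muh * ys * G ((y s / ys) / (u s / us))).
    { intros s _. destruct (Cp s) as [P1 [P2 [P3 P4]]]. change (0 < x s) in P1. change (0 < y s) in P2. change (0 < u s) in P3. change (u s < 1) in P4.
      assert (0 <= muh * (x s - xs) ^ 2 / x s) by (apply Rdiv_le_0_compat; [apply Rmult_le_pos; [lra|apply pow2_ge_0]|lra]).
      assert (0 <= muh * ys / (muv * us) * Chv * y s * (u s - us) ^ 2 / u s).
      { fold k. apply Rdiv_le_0_compat; [|lra]. apply Rmult_le_pos; [|apply pow2_ge_0].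
        apply Rmult_le_pos; [apply Rmult_le_pos|]; lra. }
      assert (0 <= muh * ys * G ((y s / ys) / (u s / us))).
      { apply Rmult_le_pos. nra. apply G_nonneg. apply Rdiv_lt_0_compat; apply Rdiv_lt_0_compat; lra. }
      lra. }
    specialize (Hcore HW). unfold Phi, beta, k. lra. }
  assert (Hu_cl : forall s, - tau <= s <= 0 -> Rabs (Iv s / (Sv s + Iv s) - us) <= K1 * delta).
  { intros s Hs. destruct (Hclose s Hs) as [_ [_ [D3 D4]]]. unfold K1. apply u_close; auto. }
  assert (HP0 : Phi 0 <= Cc * delta).
  { unfold Phi, Phif, Vf.
    assert (X0 : x 0 = Sh 0) by (unfold x, hat; rewrite Rmax_left; lra).
    assert (Y0 : y 0 = Ih 0) by (unfold y, hat; rewrite Rmax_left; lra).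
    assert (U0 : u 0 = Iv 0 / (Sv 0 + Iv 0)) by (unfold u, uhat; rewrite Rmax_left; lra).
    rewrite X0, Y0, U0.
    assert (T1 : xs * G (Sh 0 / xs) <= 2 * delta ^ 2 / xs) by (apply G_term; lra).
    assert (T2 : ys * G (Ih 0 / ys) <= 2 * delta ^ 2 / ys) by (apply G_term; lra).
    assert (T3 : us * G (Iv 0 / (Sv 0 + Iv 0) / us) <= 2 * (K1 * delta) ^ 2 / us).
    { apply G_term; auto. apply Hu_cl. lra. }
    assert (T3' : k * (us * G (Iv 0 / (Sv 0 + Iv 0) / us)) <= k * (2 * (K1 * delta) ^ 2 / us)).
    { apply Rmult_le_compat_l; lra. }
    assert (Hg : forall s, continuity_pt (fun s => G (x s * u s / (xs * us))) s).
    { intros s. destruct (Cc' s) as [? [? ?]]. destruct (Cp s) as [P1 [P2 [P3 P4]]].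
      change (0 < x s) in P1. change (0 < u s) in P3.
      apply cp_G. apply cp_div. apply cp_mult; auto. apply cp_const. nra. apply Rdiv_lt_0_compat; nra. }
    assert (T4 : RInt (fun s => G (x s * u s / (xs * us))) (0 - tau) 0 <= (0 - (0 - tau)) * (2 * (K2 * delta) ^ 2)).
    { apply RInt_bound; auto. lra. intros s Hs.
      assert (Xs : x s = Sh s) by (unfold x, hat; rewrite Rmax_left; lra).
      assert (Us : u s = Iv s / (Sv s + Iv s)) by (unfold u, uhat; rewrite Rmax_left; lra).
      destruct (Cp s) as [P1 [P2 [P3 P4]]]. change (0 < x s) in P1. change (0 < u s) in P3. change (u s < 1) in P4.
      destruct (Hclose s ltac:(lra)) as [D1 _].
      pose proof (Hu_cl s ltac:(lra)) as D2. rewrite <- Us in D2. rewrite <- Xs in D1.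
      assert (Hw : Rabs (x s * u s / (xs * us) - 1) <= K2 * delta).
      { replace (x s * u s / (xs * us) - 1) with (((x s - xs) * u s + xs * (u s - us)) / (xs * us)) by (field; lra).
        assert (Hxu : 0 < xs * us) by nra.
        rewrite Rabs_div by lra. rewrite (Rabs_right (xs * us)) by lra.
        unfold K2. unfold Rdiv. rewrite (Rmult_comm (1 + xs * K1)), Rmult_assoc.
        rewrite (Rmult_comm (Rabs _)). apply Rmult_le_compat_l. left; apply Rinv_0_lt_compat; lra.
        eapply Rle_trans. apply Rabs_triang. rewrite !Rabs_mult. rewrite (Rabs_right (u s)) by lra.
        rewrite (Rabs_right xs) by lra.
        assert (Rabs (x s - xs) * u s <= delta * 1) by (apply Rmult_le_compat; try lra; apply Rabs_pos).
        assert (xs * Rabs (u s - us) <= xs * (K1 * delta)) by (apply Rmult_le_compat_l; lra).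
        nra. }
      eapply Rle_trans. apply G_near. lra.
      assert (Rabs (x s * u s / (xs * us) - 1) ^ 2 <= (K2 * delta) ^ 2).
      { apply pow_incr. split; auto. apply Rabs_pos. }
      assert (Hsq : (x s * u s / (xs * us) - 1) ^ 2 = Rabs (x s * u s / (xs * us) - 1) ^ 2) by (rewrite RPow_abs; symmetry; apply Rabs_right; apply Rle_ge, pow2_ge_0).
      lra. }
    assert (T4' : beta * RInt (fun s => G (x s * u s / (xs * us))) (0 - tau) 0 <= beta * (tau * (2 * (K2 * delta) ^ 2))).
    { apply Rmult_le_compat_l. lra. replace (tau * (2 * (K2 * delta) ^ 2)) with ((0 - (0 - tau)) * (2 * (K2 * delta) ^ 2)) by ring. auto. }
    assert (T5 : k * D / muv * exp (- muv * 0) <= 4 * k / Ns * delta).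
    { replace (- muv * 0) with 0 by ring. rewrite exp_0, Rmult_1_r.
      unfold D, Dc. fold Ns.
      assert (Hmin : Ns / 2 <= Rmin N0 Ns) by (apply Rmin_glb; lra).
      assert (HD1 : bv * Rabs (N0 - Ns) / (Rmin N0 Ns * Ns) <= bv * (2 * delta) / (Ns / 2 * Ns)).
      { unfold Rdiv. apply Rmult_le_compat. apply Rmult_le_pos; [lra|apply Rabs_pos].
        left; apply Rinv_0_lt_compat; apply Rmult_lt_0_compat; [apply Rmin_pos|]; lra.
        apply Rmult_le_compat_l; lra.
        apply Rinv_le_contravar. nra. apply Rmult_le_compat_r; lra. }
      apply (Rle_trans _ (k * (bv * (2 * delta) / (Ns / 2 * Ns)) / muv)).
      - unfold Rdiv at 1 3. apply Rmult_le_compat_r. left; apply Rinv_0_lt_compat; lra.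
        apply Rmult_le_compat_l; lra.
      - right. unfold Ns. field. split; lra. }
    assert (Hdd : delta ^ 2 <= delta) by nra.
    unfold Cc.
    assert (2 * delta ^ 2 / xs <= 2 / xs * delta).
    { replace (2 * delta ^ 2 / xs) with ((2 / xs) * delta ^ 2) by (field; lra).
      apply Rmult_le_compat_l; auto. apply Rdiv_le_0_compat; lra. }
    assert (2 * delta ^ 2 / ys <= 2 / ys * delta).
    { replace (2 * delta ^ 2 / ys) with ((2 / ys) * delta ^ 2) by (field; lra).
      apply Rmult_le_compat_l; auto. apply Rdiv_le_0_compat; lra. }
    assert (k * (2 * (K1 * delta) ^ 2 / us) <= 2 * k * K1 ^ 2 / us * delta).
    { replace (k * (2 * (K1 * delta) ^ 2 / us)) with ((2 * k * K1 ^ 2 / us) * delta ^ 2) by (field; lra).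
      apply Rmult_le_compat_l; auto. apply Rdiv_le_0_compat; [|lra]. apply Rmult_le_pos; [lra|apply pow2_ge_0]. }
    assert (beta * (tau * (2 * (K2 * delta) ^ 2)) <= 2 * beta * tau * K2 ^ 2 * delta).
    { replace (beta * (tau * (2 * (K2 * delta) ^ 2))) with ((2 * beta * tau * K2 ^ 2) * delta ^ 2) by ring.
      apply Rmult_le_compat_l; auto. apply Rmult_le_pos; [nra|apply pow2_ge_0]. }
    lra. }
  assert (Hlow := Phi_lower xs ys us beta k tau D muv x y u t Hxs Hys Hus ltac:(lra) ltac:(lra) HD Hmuv Htau Cc' Cp).
  fold Phi in Hlow.
  assert (Hx : x t = Sh t) by (unfold x, hat; rewrite Rmax_left; lra).
  assert (Hy : y t = Ih t) by (unfold y, hat; rewrite Rmax_left; lra).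
  assert (Hu : u t = Iv t / (Sv t + Iv t)) by (unfold u, uhat; rewrite Rmax_left; lra).
  destruct (Cp t) as [P1 [P2 [P3 P4]]]. change (0 < x t) in P1. change (0 < y t) in P2.
  change (0 < u t) in P3. change (u t < 1) in P4.
  assert (G1 : 0 <= xs * G (x t / xs)) by (apply Rmult_le_pos; [lra|apply G_nonneg; apply Rdiv_lt_0_compat; lra]).
  assert (G2 : 0 <= ys * G (y t / ys)) by (apply Rmult_le_pos; [lra|apply G_nonneg; apply Rdiv_lt_0_compat; lra]).
  assert (G3 : 0 <= us * G (u t / us)) by (apply Rmult_le_pos; [lra|apply G_nonneg; apply Rdiv_lt_0_compat; lra]).
  assert (G3' : 0 <= k * (us * G (u t / us))) by (apply Rmult_le_pos; lra).
  assert (Hsum : xs * G (x t / xs) + ys * G (y t / ys) + k * (us * G (u t / us)) <= eta) by lra.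
  assert (Sx : (x t - xs) ^ 2 <= 18 * xs * eta) by (apply G_close; auto; lra).
  assert (Sy : (y t - ys) ^ 2 <= 18 * ys * eta) by (apply G_close; auto; lra).
  assert (Su : (u t - us) ^ 2 <= 18 * us * (eta / k)).
  { apply G_close; auto.
    - apply (Rmult_le_reg_l k); auto. replace (k * (eta / k)) with eta by (field; lra). lra.
    - apply (Rmult_le_reg_l k); auto. replace (k * (eta / k)) with eta by (field; lra).
      replace (k * (us / 4)) with (k * us / 4) by field. lra. }
  assert (Ax : Rabs (Sh t - xs) < eps).
  { rewrite <- Hx. apply sq_small; auto.
    assert (18 * xs * eta <= 18 * xs * (eps ^ 2 / (36 * xs))) by (apply Rmult_le_compat_l; lra).
    replace (18 * xs * (eps ^ 2 / (36 * xs))) with (eps ^ 2 / 2) in H by (field; lra).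
    assert (0 < eps ^ 2) by (apply pow_lt; lra). lra. }
  assert (Ay : Rabs (Ih t - ys) < eps).
  { rewrite <- Hy. apply sq_small; auto.
    assert (18 * ys * eta <= 18 * ys * (eps ^ 2 / (36 * ys))) by (apply Rmult_le_compat_l; lra).
    replace (18 * ys * (eps ^ 2 / (36 * ys))) with (eps ^ 2 / 2) in H by (field; lra).
    assert (0 < eps ^ 2) by (apply pow_lt; lra). lra. }
  assert (Au : Rabs (u t - us) < r).
  { apply sq_small; auto.
    assert (eta / k <= (k * r ^ 2 / (36 * us)) / k) by (unfold Rdiv; apply Rmult_le_compat_r; [left; apply Rinv_0_lt_compat|]; lra).
    assert (18 * us * (eta / k) <= 18 * us * ((k * r ^ 2 / (36 * us)) / k)) by (apply Rmult_le_compat_l; lra).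
    replace (18 * us * ((k * r ^ 2 / (36 * us)) / k)) with (r ^ 2 / 2) in H0 by (field; lra).
    assert (0 < r ^ 2) by (apply pow_lt; lra). lra. }
  assert (HNt : Rabs (Sv t + Iv t - Ns) <= 2 * delta).
  { rewrite HN by lra. fold Ns.
    replace (Ns + (N0 - Ns) * exp (- muv * t) - Ns) with ((N0 - Ns) * exp (- muv * t)) by ring.
    rewrite Rabs_mult, (Rabs_right (exp _)) by (left; apply exp_pos).
    assert (exp (- muv * t) <= 1) by (apply exp_le1; lra).
    pose proof (Rabs_pos (N0 - Ns)). pose proof (exp_pos (- muv * t)). nra. }
  assert (HNpos : 0 < Sv t + Iv t) by (destruct (Hpos t Ht0) as [? [? [? ?]]]; lra).
  assert (AIv : Rabs (Iv t - us * Ns) < eps / 2 + eps / 4).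
  { replace (Iv t - us * Ns) with ((u t - us) * (Sv t + Iv t) + us * (Sv t + Iv t - Ns)) by (rewrite Hu; field; lra).
    eapply Rle_lt_trans. apply Rabs_triang. rewrite !Rabs_mult, (Rabs_right (Sv t + Iv t)) by lra.
    rewrite (Rabs_right us) by lra.
    assert (Sv t + Iv t <= Ns + 1) by (apply Rabs_def2b in HNt || (pose proof (Rle_abs (Sv t + Iv t - Ns)); lra)).
    assert (Rabs (u t - us) * (Sv t + Iv t) < r * (Ns + 1)).
    { apply (Rle_lt_trans _ (Rabs (u t - us) * (Ns + 1))). apply Rmult_le_compat_l; auto. apply Rabs_pos.
      apply Rmult_lt_compat_r; lra. }
    assert (r * (Ns + 1) = eps / 4) by (unfold r; field; lra).
    assert (us * Rabs (Sv t + Iv t - Ns) <= 1 * (2 * delta)) by (apply Rmult_le_compat; try lra; apply Rabs_pos).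
    lra. }
  repeat split; auto.
  - replace (Sv t - (1 - us) * Ns) with ((Sv t + Iv t - Ns) - (Iv t - us * Ns)) by ring.
    unfold Rminus at 1. eapply Rle_lt_trans. apply Rabs_triang. rewrite Rabs_Ropp. lra.
  - lra.
Qed.

Theorem theorem6 (bh bv muh muv Cvh Chv tau : R) :
  0 < bh -> 0 < bv -> 0 < muh -> 0 < muv -> 0 < Cvh -> 0 < Chv -> 0 <= tau ->
  repro_number bh muh muv Cvh Chv > 1 ->
  exists Sh' Ih' Sv' Iv' : R,
    (* E* = (Sh',Ih',Sv',Iv') is the unique equilibrium with positive components *)
    (0 < Sh' /\ 0 < Ih' /\ 0 < Sv' /\ 0 < Iv' /\
     is_equilibrium bh bv muh muv Cvh Chv Sh' Ih' Sv' Iv') /\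
    (forall a b c d : R, 0 < a -> 0 < b -> 0 < c -> 0 < d ->
       is_equilibrium bh bv muh muv Cvh Chv a b c d ->
       a = Sh' /\ b = Ih' /\ c = Sv' /\ d = Iv') /\
    (* Lyapunov stability (sup-norm on C([-tau,0],R^4)) *)
    (forall eps, 0 < eps -> exists delta, 0 < delta /\
       forall Sh Ih Sv Iv : R -> R,
         init_in_D tau Sh Ih Sv Iv ->
         is_solution bh bv muh muv Cvh Chv tau Sh Ih Sv Iv ->
         (forall t, - tau <= t <= 0 ->
            Rabs (Sh t - Sh') < delta /\ Rabs (Ih t - Ih') < delta /\
            Rabs (Sv t - Sv') < delta /\ Rabs (Iv t - Iv') < delta) ->
         forall t, - tau <= t ->
            Rabs (Sh t - Sh') < eps /\ Rabs (Ih t - Ih') < eps /\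
            Rabs (Sv t - Sv') < eps /\ Rabs (Iv t - Iv') < eps) /\
    (* global attractivity in D *)
    (forall Sh Ih Sv Iv : R -> R,
       init_in_D tau Sh Ih Sv Iv ->
       is_solution bh bv muh muv Cvh Chv tau Sh Ih Sv Iv ->
       is_lim Sh p_infty Sh' /\ is_lim Ih p_infty Ih' /\
       is_lim Sv p_infty Sv' /\ is_lim Iv p_infty Iv').
Proof.
  intros Hbh Hbv Hmuh Hmuv HCvh HChv Htau HR0.
  pose proof (R0_gt bh muh muv Cvh Chv Hbh Hmuh Hmuv HCvh HChv HR0) as HR.
  destruct (eq_props bh bv muh muv Cvh Chv) as [Hus [Hus1 [Hxs [Hys _]]]]; auto.
  assert (HNs : 0 < bv / muv) by (apply Rdiv_lt_0_compat; lra).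
  exists (xs_ bh muh muv Cvh Chv), (ys_ bh muh muv Cvh Chv),
         ((1 - us_ bh muh muv Cvh Chv) * (bv / muv)), (us_ bh muh muv Cvh Chv * (bv / muv)).
  split; [|split; [|split]].
  - split; [auto|split; [auto|split; [apply Rmult_lt_0_compat; lra|split; [apply Rmult_lt_0_compat; lra|]]]].
    apply eq_is; auto.
  - intros a b c d Ha Hb Hc Hd He. apply eq_unique; auto.
  - intros eps Heps. exact (stable bh bv muh muv Cvh Chv tau Hbh Hbv Hmuh Hmuv HCvh HChv Htau HR eps Heps).
  - intros Sh Ih Sv Iv Hi Hs. apply (attract bh bv muh muv Cvh Chv tau); auto.
Qed.
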